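(* Let $M$, $\alpha,\beta,\gamma$ satisfy the standing assumptions described in the context, let $T>0$ and $b$ be as fixed in the context, and for $\xi\in\mathbb{R}^n$ let $W(t,\xi)\in\mathbb{C}^2$ be any solution on $[T,\infty)$ of $$\partial_t W=\begin{pmatrix}-2b(t)& i|\xi|\\ i|\xi|&0\end{pmatrix}W .$$ Then there exist positive constants $N$ and $K_1$ such that, for all $(t,\xi)\in Z_H$ with $\xi\neq0$: if $\alpha>0$, then $K_1^{-1}|W(t_\xi,\xi)|\le|W(t,\xi)|\le K_1|W(t_\xi,\xi)|$; if $\alpha\le0$, then $K_1^{-1}|W(T,\xi)|\le|W(t,\xi)|\le K_1|W(T,\xi)|$.
   Context: Standing assumptions: $M:[0,\infty)\to\mathbb{R}$ continuous; $\alpha\le1$, $\beta<1$, $\gamma>0$ with $\gamma\ge\beta\ge(\alpha+1)/2$ if $\alpha\ne0$ and $\gamma\ge\beta>1/2$ if $\alpha=0$; $M$ satisfies: (M1) if $\alpha\ge 0$, $\int_0^t\big|\int_s^\infty\int_\sigma^\infty M(\tau)\,d\tau\,d\sigma\big|\,ds\lesssim(1+t)^{\alpha}$; if $\alpha\le 0$, $\int_t^\infty\big|\int_s^\infty\int_\sigma^\infty M(\tau)\,d\tau\,d\sigma\big|\,ds\lesssim(1+t)^{\alpha}$ (both when $\alpha=0$); (M2) $|M(t)|\lesssim(1+t)^{-2\beta}$; (M3) $\big|\int_t^\infty M\big|\lesssim(1+t)^{-\gamma}$, $\int_t^\infty\big(\int_s^\infty M\big)^2ds\lesssim(1+t)^{-\gamma}$,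 $\int_0^\infty\int_t^\infty\big(\int_s^\infty M\big)^2\,ds\,dt<\infty$; here $f\lesssim g$ means $f\le Cg$ with $C$ independent of $t$, and the moreover the condition $\sup_{t\ge0}(1+t)^\alpha\int_t^\infty\int_s^\infty(\int_\sigma^\infty M)^2\,d\sigma\,ds<\infty$ holds. Definition of $b$ and $T$: $q_1:=M$, $Q_k(t):=-\int_t^\infty q_k$, $q_k:=\sum_{j=1}^{k-1}Q_jQ_{k-j}$ ($k\ge 2$), $\phi(t):=-\int_t^\infty Q_2$; $T>0$ is chosen so that $|\int_t^\infty Q_1(s)\,ds|\le1$ and $\phi(t)\le 6^{-4}$ for all $t\ge T$, and $b(t):=\sum_{k\ge1}Q_k(t)$ on $[T,\infty)$ (this series converges, $b$ solves $b'+b^2+M=0$, and $|b(t)|\lesssim(1+t)^{-\gamma}$, $|b'(t)|\lesssim(1+t)^{-2\beta}$, $|\int_t^\infty b|$ bounded for $t\ge T$). Zones: for $N>0$, $Z_H:=\{(t,\xi)\in[T,\infty)\times\mathbb{R}^n:(1+t)^\alpha|\xi|\ge N\}$, and for $\alpha\ne0$, $\xi\ne0$, $t_\xi:=\max\{T,(N|\xi|^{-1})^{1/\alpha}-1\}$. *)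

(* Defs.v *)
From Stdlib Require Import Reals.
From Coquelicot Require Import Coquelicot.
From mathcomp Require Import ssreflect ssrbool ssrnat seq fintype bigop.

Open Scope R_scope.

Definition Iinf (f : R -> R) (t : R) : R :=
  RInt_gen f (at_point t) (Rbar_locally p_infty).

Definition ex_Iinf (f : R -> R) (t : R) : Prop :=
  ex_RInt_gen f (at_point t) (Rbar_locally p_infty).

(* q_k from the table P of Q_1..Q_{k-1}:
   q_1 = M,  q_k = sum_{j=1}^{k-1} Q_j Q_{k-j}  (k >= 2) *)
Definition qstep (M : R -> R) (P : nat -> R -> R) (k : nat) : R -> R :=
  if Nat.eqb k 1 then M
  else fun t => foldr Rplus 0 (map (fun j => P j t * P (k - j)%nat t) (iota 1 (k - 1))).

(* Qtab M n j = Q_j for 1 <= j <= n *)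
Fixpoint Qtab (M : R -> R) (n : nat) : nat -> R -> R :=
  match n with
  | O => fun _ _ => 0
  | S m => fun j =>
      if Nat.leb j m then Qtab M m j
      else (fun t => - Iinf (qstep M (Qtab M m) (S m)) t)
  end.

(* Q_k(t) = - \int_t^\infty q_k *)
Definition Qk (M : R -> R) (k : nat) : R -> R := Qtab M k k.

Definition qk (M : R -> R) (k : nat) : R -> R := qstep M (Qtab M (k - 1)) k.

Definition phi (M : R -> R) (t : R) : R := - Iinf (Qk M 2) t.

Definition bfun (M : R -> R) (t : R) : R := Series (fun k => Qk M (S k) t).

Definition vnorm (n : nat) (xi : 'I_n -> R) : R :=
  sqrt (\big[Rplus/0]_(i < n) (xi i * xi i)).

Definition C2norm (w : C * C) : R :=
  sqrt (Cmod (fst w) ^ 2 + Cmod (snd w) ^ 2).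

Definition deriv_on_from (T : R) (f : R -> C) (f' : R -> C) : Prop :=
  forall t, T <= t ->
    filterdiff (K := R_AbsRing) (U := R_NormedModule) (V := C_R_NormedModule)
      f (within (fun x => T <= x) (locally t)) (fun h => scal h (f' t)).

Definition Ci (r : R) : C := (0, r).

Definition solves_W (b : R -> R) (r T : R) (W : R -> C * C) : Prop :=
  deriv_on_from T (fun t => fst (W t))
    (fun t => (RtoC (-2 * b t) * fst (W t) + Ci r * snd (W t))%C) /\
  deriv_on_from T (fun t => snd (W t))
    (fun t => (Ci r * fst (W t))%C).

Definition t_xi (T N alpha r : R) : R :=
  Rmax T (Rpower (N / r) (/ alpha) - 1).

(* Main.v *)
Require Import Defs.
From Stdlib Require Import Reals.
From Coquelicot Require Import Coquelicot.
From mathcomp Require Import ssreflect ssrbool ssrnat seq fintype bigop.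
From Stdlib Require Import Lra Lia FunctionalExtensionality Classical PropExtensionality.
From mathcomp Require Import zify eqtype.
Open Scope R_scope.

#[global] Instance Filter_pinfty : Filter (Rbar_locally p_infty) := @filter_filter _ _ (Rbar_locally_filter p_infty).
#[global] Instance Filter_loc (x : R) : Filter (locally x) := @filter_filter _ _ (locally_filter x).
Section Lims.
Context {T : Type} {F : (T -> Prop) -> Prop} {FF : Filter F}.
Lemma lim_plus (f g : T -> R) a b : filterlim f F (locally a) -> filterlim g F (locally b) ->
  filterlim (fun x => f x + g x) F (locally (a + b)).
Proof.
move=> Hf Hg.
exact: (filterlim_comp_2 f g Rplus Hf Hg (filterlim_plus (V:=R_NormedModule) a b)).
Qed.
Lemma lim_mult (f g : T -> R) a b : filterlim f F (locally a) -> filterlim g F (locally b) ->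
  filterlim (fun x => f x * g x) F (locally (a * b)).
Proof.
move=> Hf Hg.
exact: (filterlim_comp_2 f g Rmult Hf Hg (filterlim_mult (K:=R_AbsRing) a b)).
Qed.
Lemma lim_opp (f : T -> R) a : filterlim f F (locally a) ->
  filterlim (fun x => - f x) F (locally (- a)).
Proof.
move=> Hf; exact: (filterlim_comp _ _ _ f Ropp F (locally a) (locally (- a)) Hf (filterlim_opp (V:=R_NormedModule) a)).
Qed.
Lemma lim_minus (f g : T -> R) a b : filterlim f F (locally a) -> filterlim g F (locally b) ->
  filterlim (fun x => f x - g x) F (locally (a - b)).
Proof. move=> Hf Hg; apply: lim_plus => //; exact: lim_opp. Qed.
Lemma lim_const (c : R) : filterlim (fun _ => c) F (locally c).
Proof. exact: filterlim_const. Qed.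
Lemma lim_cont (f : T -> R) (g : R -> R) a : filterlim f F (locally a) -> continuous g a ->
  filterlim (fun x => g (f x)) F (locally (g a)).
Proof. move=> Hf Hg; exact: (filterlim_comp _ _ _ f g F (locally a) _ Hf Hg). Qed.
End Lims.

Definition PFa (t : R) : ProperFilter' (at_point t) :=
  Proper_StrongProper _ (at_point_filter (T:=R_UniformSpace) t).
Definition PFi : ProperFilter' (Rbar_locally p_infty) :=
  Proper_StrongProper _ (Rbar_locally_filter p_infty).

Lemma Iinf_lim (f : R -> R) t : (forall X, t <= X -> ex_RInt f t X) -> ex_Iinf f t ->
  filterlim (fun X => RInt f t X) (Rbar_locally p_infty) (locally (Iinf f t)).
Proof.
move=> Hloc Hex.
have H := @RInt_gen_correct _ _ _ (PFa t) PFi f Hex.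
move=> P HP.
case: (H P HP) => Q1 Q2 HQ1 HQ2 HQ.
case: HQ2 => M HM.
exists (Rmax M t) => X HX.
have HX1 : M < X by apply: Rle_lt_trans HX; apply Rmax_l.
have HX2 : t <= X by apply: Rlt_le; apply: Rle_lt_trans HX; apply Rmax_r.
case: (HQ t X HQ1 (HM X HX1)) => l [Hl Pl].
have E : RInt f t X = l by apply: (is_RInt_unique (V:=R_CompleteNormedModule)).
by rewrite /= E.
Qed.

Lemma Iinf_of_lim (f : R -> R) t l : (forall X, t <= X -> ex_RInt f t X) ->
  filterlim (fun X => RInt f t X) (Rbar_locally p_infty) (locally l) ->
  is_RInt_gen f (at_point t) (Rbar_locally p_infty) l.
Proof.
move=> Hloc Hl P HP.
case: (Hl P HP) => M HM.
apply: (Filter_prod _ _ _ (fun x => x = t) (fun y => Rmax M t < y)).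
- by [].
- by exists (Rmax M t).
move=> x y -> Hy.
exists (RInt f t y); split.
+ apply: RInt_correct; apply: Hloc; apply: Rlt_le; apply: Rle_lt_trans Hy; apply Rmax_r.
+ apply: HM; apply: Rle_lt_trans Hy; apply Rmax_l.
Qed.

Lemma Iinf_is (f : R -> R) t l : (forall X, t <= X -> ex_RInt f t X) ->
  filterlim (fun X => RInt f t X) (Rbar_locally p_infty) (locally l) ->
  ex_Iinf f t /\ Iinf f t = l.
Proof.
move=> H1 H2; have H := Iinf_of_lim f t l H1 H2.
split; first by exists l.
exact: (@is_RInt_gen_unique _ _ _ (PFa t) PFi _ _ H).
Qed.

Definition contR (f : R -> R) (a : R) := forall x, a < x -> continuous f x.

Lemma contR_exRInt (f : R -> R) a x y : contR f a -> a < x -> a < y -> ex_RInt f x y.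
Proof.
move=> Hc Hx Hy; apply: ex_RInt_continuous => z [Hz1 Hz2]; apply: Hc.
apply: Rlt_le_trans Hz1; by apply Rmin_case.
Qed.

Lemma Iinf_split (f : R -> R) a t u : contR f a -> a < t -> t <= u -> ex_Iinf f t ->
  ex_Iinf f u /\ Iinf f t = RInt f t u + Iinf f u.
Proof.
move=> Hc Ht Hu Hex.
have Hloc : forall X, t <= X -> ex_RInt f t X.
  move=> X HX; apply: (contR_exRInt _ a) => //; lra.
have Hlim := Iinf_lim f t Hloc Hex.
have Hloc' : forall X, u <= X -> ex_RInt f u X.
  move=> X HX; apply: (contR_exRInt _ a) => //; lra.
have L : filterlim (fun X => RInt f u X) (Rbar_locally p_infty)
            (locally (Iinf f t - RInt f t u)).
  apply: (filterlim_ext_loc (fun X => RInt f t X - RInt f t u)).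
    exists u => X HX.
    rewrite -(RInt_Chasles f t u X).
    - rewrite /plus /=; ring.
    - apply: (contR_exRInt _ a) => //; lra.
    - apply: (contR_exRInt _ a) => //; lra.
  exact: (lim_minus _ _ _ _ Hlim (lim_const _)).
have [E1 E2] := Iinf_is f u _ Hloc' L.
split => //; rewrite E2; ring.
Qed.

Lemma ball_R (x e y : R) : Rabs (y - x) < e -> ball x e y.
Proof. by rewrite /ball /= /AbsRing_ball /abs /minus /plus /opp /=. Qed.
Lemma ball_R' (x e y : R) : ball x e y -> Rabs (y - x) < e.
Proof. by rewrite /ball /= /AbsRing_ball /abs /minus /plus /opp /=. Qed.

Lemma loc_gt (c x : R) : c < x -> locally x (fun y => c < y).
Proof.
move=> H; have H' : 0 < x - c by lra.
exists (mkposreal _ H') => y /ball_R' /= Hy.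
move: (Rabs_def2 _ _ Hy); lra.
Qed.

Lemma loc_lt (c x : R) : x < c -> locally x (fun y => y < c).
Proof.
move=> H; have H' : 0 < c - x by lra.
exists (mkposreal _ H') => y /ball_R' /= Hy.
move: (Rabs_def2 _ _ Hy); lra.
Qed.

Lemma Iinf_deriv (f : R -> R) a x : contR f a -> (forall y, a < y -> ex_Iinf f y) -> a < x ->
  is_derive (Iinf f) x (- f x).
Proof.
move=> Hc Hex Hx.
set c := (a + x) / 2.
have Hca : a < c by rewrite /c; lra.
have Hcx : c < x by rewrite /c; lra.
have H1 : is_derive (RInt f c) x (f x).
  apply: is_derive_RInt; last by apply: Hc.
  apply: filter_imp (loc_gt c x Hcx) => y Hy.
  apply: RInt_correct; apply: (contR_exRInt _ a) => //; lra.
have H2 := is_derive_plus (fun _ => Iinf f c) (fun y => opp (RInt f c y)) x _ _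
   (is_derive_const (Iinf f c) x) (is_derive_opp _ x _ H1).
have E0 : @plus R_NormedModule zero (opp (f x)) = - f x by rewrite /plus /zero /opp /=; apply: Rplus_0_l.
rewrite E0 in H2.
apply: is_derive_ext_loc H2.
apply: filter_imp (loc_gt c x Hcx) => y Hy.
have [_ E] := Iinf_split f a c y Hc Hca (Rlt_le _ _ Hy) (Hex c Hca).
change (Iinf f c + - RInt f c y = Iinf f y); rewrite E; ring.
Qed.

Lemma Iinf_to0 (f : R -> R) a : contR f a -> (forall y, a < y -> ex_Iinf f y) ->
  filterlim (Iinf f) (Rbar_locally p_infty) (locally 0).
Proof.
move=> Hc Hex.
set t := a + 1.
have Ht : a < t by rewrite /t; lra.
have Hloc : forall X, t <= X -> ex_RInt f t X.
  move=> X HX; apply: (contR_exRInt _ a) => //; lra.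
have Hlim := Iinf_lim f t Hloc (Hex t Ht).
have E : 0 = Iinf f t - Iinf f t by ring.
rewrite E.
apply: (filterlim_ext_loc (fun X => Iinf f t - RInt f t X)).
  exists t => X HX.
  have [_ E2] := Iinf_split f a t X Hc Ht (Rlt_le _ _ HX) (Hex t Ht).
  rewrite E2; ring.
exact: (lim_minus _ _ _ _ (lim_const _) Hlim).
Qed.

Lemma Iinf_le (f g : R -> R) a t : contR f a -> contR g a -> a < t -> ex_Iinf f t -> ex_Iinf g t ->
  (forall x, t <= x -> f x <= g x) -> Iinf f t <= Iinf g t.
Proof.
move=> Hf Hg Ht Ef Eg Hle.
have Lf : forall X, t <= X -> ex_RInt f t X by move=> X HX; apply: (contR_exRInt _ a) => //; lra.
have Lg : forall X, t <= X -> ex_RInt g t X by move=> X HX; apply: (contR_exRInt _ a) => //; lra.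
have := filterlim_le (F := Rbar_locally p_infty) (fun X => RInt f t X) (fun X => RInt g t X)
   (Iinf f t) (Iinf g t) _ (Iinf_lim f t Lf Ef) (Iinf_lim g t Lg Eg).
apply.
exists t => X HX; apply: RInt_le; try lra; try (apply: Lf || apply: Lg); try lra.
move=> x Hx; apply: Hle; lra.
Qed.

Lemma Iinf_ge0 (g : R -> R) a t : contR g a -> a < t -> ex_Iinf g t ->
  (forall x, t <= x -> 0 <= g x) -> 0 <= Iinf g t.
Proof.
move=> Hg Ht Eg Hle.
have Lg : forall X, t <= X -> ex_RInt g t X by move=> X HX; apply: (contR_exRInt _ a) => //; lra.
have := filterlim_le (F := Rbar_locally p_infty) (fun X => 0) (fun X => RInt g t X)
   0 (Iinf g t) _ (lim_const 0) (Iinf_lim g t Lg Eg).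
apply.
exists t => X HX; apply: RInt_ge_0; try lra; first (apply: Lg; lra).
move=> x Hx; apply: Hle; lra.
Qed.

Lemma contR_plus f g a : contR f a -> contR g a -> contR (fun x => f x + g x) a.
Proof. move=> Hf Hg x Hx; exact: (continuous_plus (V:=R_NormedModule) f g x (Hf x Hx) (Hg x Hx)). Qed.
Lemma contR_mult f g a : contR f a -> contR g a -> contR (fun x => f x * g x) a.
Proof. move=> Hf Hg x Hx; exact: (continuous_mult (K:=R_AbsRing) f g x (Hf x Hx) (Hg x Hx)). Qed.
Lemma contR_opp f a : contR f a -> contR (fun x => - f x) a.
Proof. move=> Hf x Hx; exact: (continuous_opp (V:=R_NormedModule) f x (Hf x Hx)). Qed.
Lemma contR_const c a : contR (fun _ => c) a.
Proof. move=> x Hx; exact: continuous_const. Qed.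
Lemma contR_abs f a : contR f a -> contR (fun x => Rabs (f x)) a.
Proof.
move=> Hf x Hx; exact: (continuous_Rabs_comp f x (Hf x Hx)).
Qed.
Lemma contR_ext f g a : contR f a -> (forall x, f x = g x) -> contR g a.
Proof. move=> Hf E; have -> : g = f by apply: functional_extensionality => x; rewrite E. done. Qed.
Lemma contR_mono f a b : contR f a -> a <= b -> contR f b.
Proof. move=> Hf H x Hx; apply: Hf; lra. Qed.
Lemma contR_deriv f df a : (forall x, a < x -> is_derive f x (df x)) -> contR f a.
Proof. move=> H x Hx; apply: ex_derive_continuous; exists (df x); exact: H. Qed.

Lemma Iinf_plus (f g : R -> R) a t : contR f a -> contR g a -> a < t -> ex_Iinf f t -> ex_Iinf g t ->
  ex_Iinf (fun x => f x + g x) t /\ Iinf (fun x => f x + g x) t = Iinf f t + Iinf g t.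
Proof.
move=> Hf Hg Ht Ef Eg.
have Lf : forall X, t <= X -> ex_RInt f t X by move=> X HX; apply: (contR_exRInt _ a) => //; lra.
have Lg : forall X, t <= X -> ex_RInt g t X by move=> X HX; apply: (contR_exRInt _ a) => //; lra.
apply: Iinf_is.
  move=> X HX; apply: (contR_exRInt _ a); [exact: contR_plus|done|lra].
apply: (filterlim_ext_loc (fun X => RInt f t X + RInt g t X)).
  exists t => X HX; rewrite (RInt_plus (V:=R_CompleteNormedModule)) //; [apply: Lf|apply: Lg]; lra.
exact: (lim_plus _ _ _ _ (Iinf_lim f t Lf Ef) (Iinf_lim g t Lg Eg)).
Qed.

Lemma Iinf_scal (f : R -> R) k a t : contR f a -> a < t -> ex_Iinf f t ->
  ex_Iinf (fun x => k * f x) t /\ Iinf (fun x => k * f x) t = k * Iinf f t.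
Proof.
move=> Hf Ht Ef.
have Lf : forall X, t <= X -> ex_RInt f t X by move=> X HX; apply: (contR_exRInt _ a) => //; lra.
apply: Iinf_is.
  move=> X HX; apply: (contR_exRInt _ a); [apply: contR_mult => //; exact: contR_const|done|lra].
apply: (filterlim_ext_loc (fun X => k * RInt f t X)).
  exists t => X HX; rewrite (RInt_scal (V:=R_CompleteNormedModule)) //; apply: Lf; lra.
exact: (lim_mult _ _ _ _ (lim_const k) (Iinf_lim f t Lf Ef)).
Qed.

Lemma Iinf_opp (f : R -> R) a t : contR f a -> a < t -> ex_Iinf f t ->
  ex_Iinf (fun x => - f x) t /\ Iinf (fun x => - f x) t = - Iinf f t.
Proof.
move=> Hf Ht Ef.
have [H1 H2] := Iinf_scal f (-1) a t Hf Ht Ef.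
have E : (fun x => - f x) = (fun x => -1 * f x) by apply: functional_extensionality => x; ring.
rewrite E; split => //; rewrite H2; ring.
Qed.

Lemma Iinf_ext (f g : R -> R) t : (forall x, f x = g x) -> Iinf f t = Iinf g t /\ (ex_Iinf f t -> ex_Iinf g t).
Proof.
move=> E; have -> : g = f by apply: functional_extensionality => x; rewrite E.
done.
Qed.

Lemma mono_lim (F : R -> R) t B : (forall x y, t <= x -> x <= y -> F x <= F y) ->
  (forall x, t <= x -> F x <= B) -> exists l, filterlim F (Rbar_locally p_infty) (locally l).
Proof.
move=> Hm Hb.
set E := fun y => exists x, t <= x /\ y = F x.
have HE : bound E by exists B => y [x [Hx ->]]; apply: Hb.
have HE2 : exists y, E y by exists (F t), t; split => //; lra.
case: (completeness E HE HE2) => l [Hub Hlub].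
exists l; apply/filterlim_locally => eps.
have NH : ~ (forall y, E y -> y <= l - eps).
  move=> H; have := Hlub _ H; have := cond_pos eps; lra.
have [y Hy'] := Classical_Pred_Type.not_all_ex_not _ _ NH.
have [Ey Hy] := Classical_Prop.imply_to_and _ _ Hy'.
case: Ey => x0 [Hx0 Ey]; rewrite Ey in Hy.
exists x0 => X HX; apply: ball_R.
have H1 : F x0 <= F X by apply: Hm; lra.
have H2 : F X <= l by apply: Hub; exists X; split => //; lra.
apply: Rabs_def1; lra.
Qed.

Lemma Iinf_compare (f g : R -> R) a t : contR f a -> contR g a -> a < t ->
  (forall x, t <= x -> Rabs (f x) <= g x) -> ex_Iinf g t -> ex_Iinf f t.
Proof.
move=> Hf Hg Ht Hle Eg.
set h := fun x => f x + g x.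
have Hh : contR h a by apply: contR_plus.
have Lh : forall x y, t <= x -> t <= y -> ex_RInt h x y by move=> x y Hx Hy; apply: (contR_exRInt _ a) => //; lra.
have Lg : forall X, t <= X -> ex_RInt g t X by move=> X HX; apply: (contR_exRInt _ a) => //; lra.
have g0 : forall x, t <= x -> 0 <= g x by move=> x Hx; have := Hle x Hx; have := Rabs_pos (f x); lra.
have h0 : forall x, t <= x -> 0 <= h x.
  move=> x Hx; have := Hle x Hx; rewrite /h.
  have := Rle_abs (- f x); rewrite Rabs_Ropp; lra.
have Hgb : forall X, t <= X -> RInt g t X <= Iinf g t.
  move=> X HX; have [E1 E2] := Iinf_split g a t X Hg Ht HX Eg.
  rewrite E2; have := Iinf_ge0 g a X Hg ltac:(lra) E1 ltac:(move=> x Hx; apply: g0; lra); lra.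
have [l Hl] : exists l, filterlim (fun X => RInt h t X) (Rbar_locally p_infty) (locally l).
  apply: (mono_lim _ t (2 * Iinf g t)).
    move=> x y Hx Hxy; rewrite -(RInt_Chasles h t x y); try (apply: Lh; lra).
    have := RInt_ge_0 h x y Hxy (Lh x y Hx ltac:(lra)) ltac:(move=> z Hz; apply: h0; lra).
    rewrite /plus /=; lra.
  move=> x Hx; have := Hgb x Hx.
  have : RInt h t x <= RInt (fun z => 2 * g z) t x.
    apply: RInt_le => //; try (apply: Lh; lra).
      apply: (contR_exRInt _ a); [apply: contR_mult => //; exact: contR_const|lra|lra].
    move=> z Hz; have := Hle z ltac:(lra); rewrite /h; have := Rle_abs (f z); lra.
  rewrite (RInt_scal (V:=R_CompleteNormedModule)); last by apply: Lg.
  rewrite /scal /= /mult /=; lra.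
have Lf : forall X, t <= X -> ex_RInt f t X by move=> X HX; apply: (contR_exRInt _ a) => //; lra.
have L : filterlim (fun X => RInt f t X) (Rbar_locally p_infty) (locally (l - Iinf g t)).
  apply: (filterlim_ext_loc (fun X => RInt h t X - RInt g t X)).
    exists t => X HX.
    rewrite /h (RInt_plus (V:=R_CompleteNormedModule)); try (apply: Lf || apply: Lg); try lra.
    rewrite /plus /=; ring.
  exact: (lim_minus _ _ _ _ Hl (Iinf_lim g t Lg Eg)).
exact: (proj1 (Iinf_is f t _ Lf L)).
Qed.

Definition fsum (F : nat -> R) (a n : nat) : R := foldr Rplus 0 (map F (iota a n)).

Lemma fsum0 F a : fsum F a 0 = 0. Proof. by []. Qed.
Lemma fsum_S F a n : fsum F a n.+1 = F a + fsum F a.+1 n. Proof. by []. Qed.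
Lemma fsum_last F a n : fsum F a n.+1 = fsum F a n + F (a + n)%N.
Proof.
elim: n a => [|n IH] a.
  rewrite /fsum /= addn0; ring.
rewrite fsum_S IH fsum_S; have -> : (a.+1 + n = a + n.+1)%N by lia.
ring.
Qed.
Lemma fsum_ext F G a n : (forall i, (a <= i)%N -> (i < a + n)%N -> F i = G i) ->
  fsum F a n = fsum G a n.
Proof.
elim: n a => [|n IH] a H; first by [].
rewrite !fsum_S (H a) ?IH //; try lia.
move=> i H1 H2; apply: H; lia.
Qed.
Lemma fsum_le F G a n : (forall i, (a <= i)%N -> (i < a + n)%N -> F i <= G i) ->
  fsum F a n <= fsum G a n.
Proof.
elim: n a => [|n IH] a H; first by rewrite /fsum /=; lra.
rewrite !fsum_S; apply: Rplus_le_compat; first (apply: H; lia).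
apply: IH => i H1 H2; apply: H; lia.
Qed.
Lemma fsum_ge0 F a n : (forall i, (a <= i)%N -> (i < a + n)%N -> 0 <= F i) -> 0 <= fsum F a n.
Proof.
move=> H; have := fsum_le (fun _ => 0) F a n H.
suff -> : fsum (fun _ => 0) a n = 0 by [].
by elim: n a {H} => [|n IH] a //; rewrite fsum_S IH; ring.
Qed.
Lemma fsum_abs F a n : Rabs (fsum F a n) <= fsum (fun i => Rabs (F i)) a n.
Proof.
elim: n a => [|n IH] a; first by rewrite /fsum /= Rabs_R0; lra.
rewrite !fsum_S; apply: Rle_trans (Rabs_triang _ _) _.
have := IH a.+1; lra.
Qed.
Lemma fsum_plus F G a n : fsum (fun i => F i + G i) a n = fsum F a n + fsum G a n.
Proof. elim: n a => [|n IH] a; first by rewrite /fsum /=; ring. rewrite !fsum_S IH; ring. Qed.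
Lemma fsum_mulr F c a n : c * fsum F a n = fsum (fun i => c * F i) a n.
Proof. elim: n a => [|n IH] a; first by rewrite /fsum /=; ring. rewrite !fsum_S -IH; ring. Qed.

Lemma fsum_deriv (F dF : nat -> R -> R) a n x :
  (forall i, (a <= i)%N -> (i < a + n)%N -> is_derive (F i) x (dF i x)) ->
  is_derive (fun y => fsum (fun i => F i y) a n) x (fsum (fun i => dF i x) a n).
Proof.
elim: n a => [|n IH] a H.
  rewrite /fsum /=; exact: is_derive_const.
rewrite fsum_S.
have E : (fun y => fsum (fun i => F i y) a n.+1) = (fun y => plus (F a y) (fsum (fun i => F i y) a.+1 n)).
  by apply: functional_extensionality => y; rewrite fsum_S.
rewrite E; apply: is_derive_plus; first (apply: H; lia).
apply: IH => i H1 H2; apply: H; lia.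
Qed.

Lemma fsum_contR (F : nat -> R -> R) a n b :
  (forall i, (a <= i)%N -> (i < a + n)%N -> contR (F i) b) ->
  contR (fun y => fsum (fun i => F i y) a n) b.
Proof.
elim: n a => [|n IH] a H.
  rewrite /fsum /=; exact: contR_const.
apply: (contR_ext (fun y => F a y + fsum (fun i => F i y) a.+1 n)); last by move=> y; rewrite fsum_S.
apply: contR_plus; first (apply: H; lia).
apply: IH => i H1 H2; apply: H; lia.
Qed.

Lemma Qtab_eq M n j : (1 <= j)%N -> (j <= n)%N -> Qtab M n j = Qk M j.
Proof.
elim: n => [|n IH] H1 H2; first lia.
case: (leqP j n) => Hj.
  rewrite /= (_ : Nat.leb j n = true); last by apply/Nat.leb_le; lia.
  exact: IH.
have -> : j = n.+1 by lia.
by [].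
Qed.

Lemma Qk_S M n : Qk M n.+1 = fun t => - Iinf (qk M n.+1) t.
Proof.
rewrite /Qk /qk.
have E : Qtab M n.+1 n.+1 = fun t => - Iinf (qstep M (Qtab M n) n.+1) t.
  by rewrite /= -/(Nat.leb n.+1 n) (_ : Nat.leb n.+1 n = false) //; apply/Nat.leb_gt; lia.
by rewrite E subn1.
Qed.

Lemma qk_1 M : qk M 1 = M.
Proof. by []. Qed.

Lemma Qk_1 M : Qk M 1 = fun t => - Iinf M t.
Proof. by rewrite Qk_S qk_1. Qed.

Lemma qk_ge2 M k : (2 <= k)%N ->
  qk M k = fun t => fsum (fun j => Qk M j t * Qk M (k - j) t) 1 (k - 1).
Proof.
move=> Hk; rewrite /qk /qstep (_ : Nat.eqb k 1 = false); last by apply/Nat.eqb_neq; lia.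
apply: functional_extensionality => t.
rewrite -/(fsum (fun j => Qtab M (k - 1) j t * Qtab M (k - 1) (k - j) t) 1 (k - 1)).
apply: fsum_ext => i H1 H2.
rewrite !Qtab_eq //; lia.
Qed.

Lemma deriv_nonincr (f df : R -> R) a x y : (forall z, a < z -> is_derive f z (df z)) ->
  (forall z, a < z -> df z <= 0) -> a < x -> x <= y -> f y <= f x.
Proof.
move=> Hd Hn Hx Hxy.
case: (MVT_gen f x y df).
- move=> z [Hz1 Hz2]; apply: Hd; move: Hz1; rewrite /Rmin; case: Rle_dec; lra.
- move=> z [Hz1 Hz2]; apply/continuity_pt_filterlim; apply: ex_derive_continuous.
  exists (df z); apply: Hd; move: Hz1; rewrite /Rmin; case: Rle_dec; lra.
move=> c [[Hc1 Hc2] E].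
have Hc : a < c by move: Hc1; rewrite /Rmin; case: Rle_dec; lra.
have := Hn c Hc; have : 0 <= y - x by lra.
move=> H1 H2; have : df c * (y - x) <= 0 by apply: Rmult_le_0_r.
lra.
Qed.

Lemma nonincr_lim0 (f : R -> R) t : (forall x y, t <= x -> x <= y -> f y <= f x) ->
  filterlim f (Rbar_locally p_infty) (locally 0) -> 0 <= f t.
Proof.
move=> Hm Hl.
have := filterlim_le (F := Rbar_locally p_infty) f (fun _ => f t) 0 (f t) _ Hl (lim_const (f t)).
apply; exists t => X HX; apply: Hm; lra.
Qed.

Lemma Iinf_abs (f : R -> R) a t : contR f a -> a < t -> ex_Iinf f t ->
  ex_Iinf (fun x => Rabs (f x)) t -> Rabs (Iinf f t) <= Iinf (fun x => Rabs (f x)) t.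
Proof.
move=> Hf Ht Ef Ea.
have Ha : contR (fun x => Rabs (f x)) a by apply: contR_abs.
have H1 := Iinf_le f (fun x => Rabs (f x)) a t Hf Ha Ht Ef Ea (fun x _ => Rle_abs (f x)).
have [Eo Io] := Iinf_opp _ a t Ha Ht Ea.
have H2 := Iinf_le (fun x => - Rabs (f x)) f a t (contR_opp _ _ Ha) Hf Ht Eo Ef
   (fun x _ => ltac:(have := Rle_abs (- f x); rewrite Rabs_Ropp; lra)).
rewrite Io in H2.
apply: Rabs_le; lra.
Qed.

Definition sqI M s := Iinf M s ^ 2.
Definition psi M := Iinf (sqI M).
Definition Phi M := Iinf (psi M).

Section Basic.
Variable M : R -> R.
Hypothesis HMc : contR M 0.
Hypothesis HI1 : forall t, 0 < t -> ex_Iinf M t.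
Hypothesis HI2 : forall t, 0 < t -> ex_Iinf (Iinf M) t.
Hypothesis HJ1 : forall t, 0 < t -> ex_Iinf (sqI M) t.
Hypothesis HJ2 : forall t, 0 < t -> ex_Iinf (psi M) t.

Lemma I_deriv t : 0 < t -> is_derive (Iinf M) t (- M t).
Proof. move=> Ht; exact: (Iinf_deriv M 0). Qed.
Lemma I_cont : contR (Iinf M) 0.
Proof. exact: (contR_deriv _ (fun t => - M t) 0 I_deriv). Qed.
Lemma sq_cont : contR (sqI M) 0.
Proof.
apply: (contR_ext (fun s => Iinf M s * Iinf M s)); last by move=> s; rewrite /sqI; ring.
apply: contR_mult; exact: I_cont.
Qed.
Lemma sq_ge0 t : 0 <= sqI M t.
Proof. rewrite /sqI; nra. Qed.
Lemma psi_deriv t : 0 < t -> is_derive (psi M) t (- sqI M t).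
Proof. move=> Ht; exact: (Iinf_deriv _ 0 t sq_cont HJ1). Qed.
Lemma psi_cont : contR (psi M) 0.
Proof. exact: (contR_deriv _ (fun t => - sqI M t) 0 psi_deriv). Qed.
Lemma psi_ge0 t : 0 < t -> 0 <= psi M t.
Proof. move=> Ht; apply: (Iinf_ge0 _ 0) => //; [exact: sq_cont|exact: HJ1|move=> x _; exact: sq_ge0]. Qed.
Lemma psi_nonincr x y : 0 < x -> x <= y -> psi M y <= psi M x.
Proof.
move=> Hx Hy; apply: (deriv_nonincr _ _ 0 x y psi_deriv) => // z Hz; have := sq_ge0 z; lra.
Qed.
Lemma psi_to0 : filterlim (psi M) (Rbar_locally p_infty) (locally 0).
Proof. exact: (Iinf_to0 _ 0 sq_cont HJ1). Qed.
Lemma Phi_deriv t : 0 < t -> is_derive (Phi M) t (- psi M t).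
Proof. move=> Ht; exact: (Iinf_deriv _ 0 t psi_cont HJ2). Qed.
Lemma Phi_cont : contR (Phi M) 0.
Proof. exact: (contR_deriv _ (fun t => - psi M t) 0 Phi_deriv). Qed.
Lemma Phi_ge0 t : 0 < t -> 0 <= Phi M t.
Proof. move=> Ht; apply: (Iinf_ge0 _ 0) => //; [exact: psi_cont|exact: HJ2|move=> x Hx; apply: psi_ge0; lra]. Qed.
Lemma Phi_nonincr x y : 0 < x -> x <= y -> Phi M y <= Phi M x.
Proof.
move=> Hx Hy; apply: (deriv_nonincr _ _ 0 x y Phi_deriv) => // z Hz; have := psi_ge0 z Hz; lra.
Qed.
Lemma Phi_to0 : filterlim (Phi M) (Rbar_locally p_infty) (locally 0).
Proof. exact: (Iinf_to0 _ 0 psi_cont HJ2). Qed.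

Lemma Q1_eq : Qk M 1 = fun t => - Iinf M t.
Proof. exact: Qk_1. Qed.
Lemma Q1_cont : contR (Qk M 1) 0.
Proof. rewrite Q1_eq; apply: contR_opp; exact: I_cont. Qed.
Lemma Q1_deriv t : 0 < t -> is_derive (Qk M 1) t (qk M 1 t).
Proof.
move=> Ht; rewrite Q1_eq qk_1.
have H := is_derive_opp _ _ _ (I_deriv t Ht).
rewrite /opp /= Ropp_involutive in H; exact: H.
Qed.
Lemma A_ex t : 0 < t -> ex_Iinf (Qk M 1) t.
Proof.
move=> Ht; rewrite Q1_eq; exact: (proj1 (Iinf_opp _ 0 t I_cont Ht (HI2 t Ht))).
Qed.
Lemma A_deriv t : 0 < t -> is_derive (Iinf (Qk M 1)) t (Iinf M t).
Proof.
move=> Ht; have H := Iinf_deriv _ 0 t Q1_cont A_ex Ht.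
by rewrite Q1_eq Ropp_involutive in H.
Qed.
End Basic.


Lemma isd_eq (f : R -> R) (x l l' : R) : is_derive f x l -> l = l' -> is_derive f x l'.
Proof. by move=> H <-. Qed.
Lemma isd_plus (f g : R -> R) x df dg : is_derive f x df -> is_derive g x dg ->
  is_derive (fun y => f y + g y) x (df + dg).
Proof. move=> H1 H2; exact: (is_derive_plus f g x df dg H1 H2). Qed.
Lemma isd_mult (f g : R -> R) x df dg : is_derive f x df -> is_derive g x dg ->
  is_derive (fun y => f y * g y) x (df * g x + f x * dg).
Proof. move=> H1 H2; exact: (is_derive_mult f g x df dg H1 H2 Rmult_comm). Qed.
Lemma isd_scal (f : R -> R) k x df : is_derive f x df -> is_derive (fun y => k * f y) x (k * df).
Proof. move=> H; exact: (is_derive_scal f x k df H). Qed.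
Lemma isd_opp (f : R -> R) x df : is_derive f x df -> is_derive (fun y => - f y) x (- df).
Proof. move=> H; exact: (is_derive_opp f x df H). Qed.
Lemma isd_minus (f g : R -> R) x df dg : is_derive f x df -> is_derive g x dg ->
  is_derive (fun y => f y - g y) x (df - dg).
Proof. move=> H1 H2; apply: isd_plus => //; exact: isd_opp. Qed.
Lemma isd_const (c x : R) : is_derive (fun _ => c) x 0.
Proof. exact: (is_derive_const c x). Qed.
Lemma isd_id (x : R) : is_derive (fun y => y) x 1.
Proof. exact: (is_derive_id x). Qed.
Lemma isd_exp (f : R -> R) x df : is_derive f x df -> is_derive (fun y => exp (f y)) x (df * exp (f x)).
Proof. move=> H; exact: (is_derive_comp exp f x (exp (f x)) df (is_derive_exp (f x)) H). Qed.

Lemma fsum_mono_n (w : nat -> R) a m n : (forall i, 0 <= w i) -> (m <= n)%N -> fsum w a m <= fsum w a n.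
Proof.
move=> Hw; elim: n => [|n IH] Hmn.
  have -> : m = 0%N by lia. lra.
case: (leqP m n) => H.
  rewrite fsum_last; have := IH H; have := Hw (a + n)%N; lra.
have -> : m = n.+1 by lia. lra.
Qed.

Lemma pair_id (w : nat -> R) n :
  fsum (fun k => fsum (fun j => w j * w (k - j)%N) 1 (k - 1)) 2 n =
  fsum (fun j => w j * fsum w 1 (n + 1 - j)) 1 n.
Proof.
elim: n => [|n IH]; first by [].
rewrite fsum_last IH.
rewrite (fsum_ext (fun j => w j * fsum w 1 (n.+1 + 1 - j))
                  (fun j => w j * fsum w 1 (n + 1 - j) + w j * w (n.+2 - j)%N)); last first.
  move=> i H1 H2.
  have -> : (n.+1 + 1 - i = (n + 1 - i).+1)%N by lia.
  rewrite fsum_last; have -> : (1 + (n + 1 - i) = n.+2 - i)%N by lia.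
  ring.
rewrite fsum_plus fsum_last.
have -> : (n + 1 - (1 + n) = 0)%N by lia.
rewrite fsum0 Rmult_0_r Rplus_0_r.
have -> : ((2 + n) - 1 = n.+1)%N by lia.
have -> : fsum (fun j => w j * w (n.+2 - j)%N) 1 n.+1 = fsum (fun j => w j * w ((2 + n) - j)%N) 1 n.+1.
  by apply: fsum_ext => i _ _; have -> : (2 + n = n.+2)%N by lia.
ring.
Qed.

Lemma pair_bound (w : nat -> R) n : (forall i, 0 <= w i) ->
  fsum (fun k => fsum (fun j => w j * w (k - j)%N) 1 (k - 1)) 2 n <= (fsum w 1 n) ^ 2.
Proof.
move=> Hw; rewrite pair_id.
apply: Rle_trans (_ : fsum (fun j => fsum w 1 n * w j) 1 n <= _).
  apply: fsum_le => i H1 H2; rewrite Rmult_comm; apply: Rmult_le_compat_r; first exact: Hw.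
  apply: fsum_mono_n => //; lia.
rewrite -fsum_mulr; lra.
Qed.

Lemma comb (Qv : nat -> R) n :
  fsum (fun k => 2 ^ (k - 2) * Rabs (fsum (fun j => Qv j * Qv (k - j)%N) 1 (k - 1))) 2 n <=
  (fsum (fun j => 2 ^ (j - 1) * Rabs (Qv j)) 1 n) ^ 2.
Proof.
set w := fun j => 2 ^ (j - 1) * Rabs (Qv j).
have Hw : forall i, 0 <= w i by move=> i; rewrite /w; apply: Rmult_le_pos; [apply: pow_le; lra|apply: Rabs_pos].
apply: Rle_trans (pair_bound w n Hw).
apply: fsum_le => k Hk1 Hk2.
apply: Rle_trans (_ : 2 ^ (k - 2) * fsum (fun j => Rabs (Qv j * Qv (k - j)%N)) 1 (k - 1) <= _).
  apply: Rmult_le_compat_l; [apply: pow_le; lra|apply: fsum_abs].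
rewrite fsum_mulr; apply: Req_le; apply: fsum_ext => j Hj1 Hj2.
rewrite /w Rabs_mult.
have -> : (k - 2 = (j - 1) + (k - j - 1))%N by lia.
rewrite pow_add; ring.
Qed.

Lemma fsum_lim0 (F : nat -> R -> R) a n :
  (forall i, (a <= i)%N -> (i < a + n)%N -> filterlim (F i) (Rbar_locally p_infty) (locally 0)) ->
  filterlim (fun t => fsum (fun i => F i t) a n) (Rbar_locally p_infty) (locally 0).
Proof.
elim: n a => [|n IH] a H.
  exact: (lim_const 0).
have E : (fun t => fsum (fun i => F i t) a n.+1) = (fun t => F a t + fsum (fun i => F i t) a.+1 n).
  by apply: functional_extensionality => t; rewrite fsum_S.
rewrite E -(Rplus_0_r 0).
apply: lim_plus; first (apply: H; lia).
apply: IH => i H1 H2; apply: H; lia.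
Qed.

Definition mk M k := Iinf (fun s => Rabs (qk M k s)).
Definition SK M K t := fsum (fun k => 2 ^ (k - 2) * mk M k t) 2 (K - 1).
Definition Gf M t := 3 / 2 * psi M t + 48 * (psi M t * Phi M t).

Section Induct.
Variable M : R -> R.
Hypothesis HMc : contR M 0.
Hypothesis HI1 : forall t, 0 < t -> ex_Iinf M t.
Hypothesis HI2 : forall t, 0 < t -> ex_Iinf (Iinf M) t.
Hypothesis HJ1 : forall t, 0 < t -> ex_Iinf (sqI M) t.
Hypothesis HJ2 : forall t, 0 < t -> ex_Iinf (psi M) t.
Variable a : R.
Hypothesis Ha : 0 < a.
Hypothesis HPhi : Phi M a <= 2 / 1296.

Let psi_ge0' := psi_ge0 M HMc HI1 HJ1.
Let psi_nonincr' := psi_nonincr M HMc HI1 HJ1.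
Let psi_deriv' := psi_deriv M HMc HI1 HJ1.
Let psi_to0' := psi_to0 M HMc HI1 HJ1.
Let psi_cont' := psi_cont M HMc HI1 HJ1.
Let sq_cont' := sq_cont M HMc HI1.
Let Phi_ge0' := Phi_ge0 M HMc HI1 HJ1 HJ2.
Let Phi_nonincr' := Phi_nonincr M HMc HI1 HJ1 HJ2.
Let Phi_deriv' := Phi_deriv M HMc HI1 HJ1 HJ2.
Let Phi_to0' := Phi_to0 M HMc HI1 HJ1 HJ2.
Let Q1_cont' := Q1_cont M HMc HI1.
Let Q1_deriv' := Q1_deriv M HMc HI1.

Definition Good K := forall k, (2 <= k)%N -> (k <= K)%N ->
  contR (qk M k) a /\ forall t, a < t -> ex_Iinf (qk M k) t /\ ex_Iinf (fun s => Rabs (qk M k s)) t.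
Definition Bound K := forall t, a < t -> SK M K t <= Gf M t.

Lemma G_le t : a < t -> Gf M t <= 2 * psi M t.
Proof.
move=> Ht; rewrite /Gf.
have H1 := psi_ge0' t ltac:(lra).
have H2 := Phi_nonincr' a t Ha ltac:(lra).
have H3 := Phi_ge0' t ltac:(lra).
nra.
Qed.

Lemma Qgood K : Good K -> forall k, (1 <= k)%N -> (k <= K)%N ->
  contR (Qk M k) a /\ forall t, a < t -> is_derive (Qk M k) t (qk M k t).
Proof.
move=> HG k Hk1 Hk2.
case: (ltnP 1 k) => Hk.
  have [Hc He] := HG k Hk Hk2.
  have Ek : Qk M k = Qk M (k - 1).+1 by congr Qk; lia.
  have Ek' : qk M k = qk M (k - 1).+1 by congr qk; lia.
  have D : forall t, a < t -> is_derive (Qk M k) t (qk M k t).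
    move=> t Ht; rewrite Ek Qk_S -Ek'.
    have H := is_derive_opp _ _ _ (Iinf_deriv (qk M k) a t Hc (fun y Hy => proj1 (He y Hy)) Ht).
    rewrite /opp /= Ropp_involutive in H; exact: H.
  split => //; exact: (contR_deriv _ (qk M k) a D).
have -> : k = 1%N by lia.
split; first exact: (contR_mono _ 0 a Q1_cont' ltac:(lra)).
move=> t Ht; apply: Q1_deriv'; lra.
Qed.

Lemma Qabs_m K : Good K -> forall k t, (2 <= k)%N -> (k <= K)%N -> a < t ->
  Rabs (Qk M k t) <= mk M k t.
Proof.
move=> HG k t Hk1 Hk2 Ht.
have [Hc He] := HG k Hk1 Hk2.
have Ek : Qk M k = Qk M (k - 1).+1 by congr Qk; lia.
have Ek' : qk M k = qk M (k - 1).+1 by congr qk; lia.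
rewrite Ek Qk_S -Ek' Rabs_Ropp.
have [E1 E2] := He t Ht.
exact: (Iinf_abs _ a t Hc Ht E1 E2).
Qed.

Lemma m_deriv K : Good K -> forall k t, (2 <= k)%N -> (k <= K)%N -> a < t ->
  is_derive (mk M k) t (- Rabs (qk M k t)).
Proof.
move=> HG k t Hk1 Hk2 Ht.
have [Hc He] := HG k Hk1 Hk2.
exact: (Iinf_deriv _ a t (contR_abs _ _ Hc) (fun y Hy => proj2 (He y Hy)) Ht).
Qed.

Lemma m_to0 K : Good K -> forall k, (2 <= k)%N -> (k <= K)%N ->
  filterlim (mk M k) (Rbar_locally p_infty) (locally 0).
Proof.
move=> HG k Hk1 Hk2.
have [Hc He] := HG k Hk1 Hk2.
exact: (Iinf_to0 _ a (contR_abs _ _ Hc) (fun y Hy => proj2 (He y Hy))).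
Qed.

Lemma Xbound K : (1 <= K)%N -> Good K -> Bound K -> forall t, a < t ->
  fsum (fun k => 2 ^ (k - 2) * Rabs (qk M k t)) 2 K <= (Rabs (Iinf M t) + 4 * psi M t) ^ 2.
Proof.
move=> HK HG HB t Ht.
have E : fsum (fun k => 2 ^ (k - 2) * Rabs (qk M k t)) 2 K =
   fsum (fun k => 2 ^ (k - 2) * Rabs (fsum (fun j => Qk M j t * Qk M (k - j)%N t) 1 (k - 1))) 2 K.
  apply: fsum_ext => k H1 H2; by rewrite qk_ge2.
rewrite E; apply: Rle_trans (comb (fun j => Qk M j t) K) _.
have Hs : fsum (fun j => 2 ^ (j - 1) * Rabs (Qk M j t)) 1 K <= Rabs (Iinf M t) + 4 * psi M t.
  have -> : K = (K - 1).+1 by lia.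
  rewrite fsum_S Q1_eq /= Rmult_1_l Rabs_Ropp.
  have : fsum (fun j => 2 ^ (j - 1) * Rabs (Qk M j t)) 2 (K - 1) <= 2 * SK M K t.
    rewrite /SK fsum_mulr; apply: fsum_le => k H1 H2.
    have -> : (k - 1 = (k - 2).+1)%N by lia.
    rewrite /=.
    have := Qabs_m K HG k t ltac:(lia) ltac:(lia) Ht.
    have : 0 <= 2 ^ (k - 2) by apply: pow_le; lra.
    nra.
  have := HB t Ht; have := G_le t Ht; lra.
have H0 : 0 <= fsum (fun j => 2 ^ (j - 1) * Rabs (Qk M j t)) 1 K.
  apply: fsum_ge0 => i _ _; apply: Rmult_le_pos; [apply: pow_le; lra|apply: Rabs_pos].
apply: pow_incr; lra.
Qed.

Lemma step K : (1 <= K)%N -> Good K -> Bound K -> Good K.+1 /\ Bound K.+1.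
Proof.
move=> HK HG HB.
have Qg := Qgood K HG.
have Hc : contR (qk M K.+1) a.
  apply: (contR_ext (fun t => fsum (fun j => Qk M j t * Qk M (K.+1 - j)%N t) 1 (K.+1 - 1))); last first.
    by move=> t; rewrite qk_ge2 //; lia.
  apply: fsum_contR => j H1 H2.
  apply: contR_mult; [apply: (proj1 (Qg j _ _))|apply: (proj1 (Qg (K.+1 - j)%N _ _))]; lia.
have Hpt : forall x, a < x -> Rabs (qk M K.+1 x) <= (Rabs (Iinf M x) + 4 * psi M x) ^ 2.
  move=> x Hx.
  have X := Xbound K HK HG HB x Hx.
  have EK : K = (K - 1).+1 by lia.
  rewrite {1}EK fsum_last in X.
  have EK2 : (2 + (K - 1) = K.+1)%N by lia.
  have EK3 : (K.+1 - 2 = K - 1)%N by lia.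
  rewrite EK2 EK3 in X.
  have H1 : 1 <= 2 ^ (K - 1) by apply: pow_R1_Rle; lra.
  have H2 : 0 <= fsum (fun k => 2 ^ (k - 2) * Rabs (qk M k x)) 2 (K - 1).
    apply: fsum_ge0 => i _ _; apply: Rmult_le_pos; [apply: pow_le; lra|apply: Rabs_pos].
  have := Rabs_pos (qk M K.+1 x); nra.
have Hex : forall t, a < t -> ex_Iinf (qk M K.+1) t /\ ex_Iinf (fun s => Rabs (qk M K.+1 s)) t.
  move=> t Ht.
  set g := fun x => 2 * sqI M x + 32 * psi M t * psi M x.
  have Hgc : contR g a.
    apply: (contR_mono _ 0); last lra.
    apply: contR_plus; apply: contR_mult; try exact: contR_const; try exact: sq_cont'.
    exact: psi_cont'.
  have Hgex : ex_Iinf g t.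
    have [E1 _] := Iinf_scal (sqI M) 2 0 t sq_cont' ltac:(lra) (HJ1 t ltac:(lra)).
    have [E2 _] := Iinf_scal (psi M) (32 * psi M t) 0 t psi_cont' ltac:(lra) (HJ2 t ltac:(lra)).
    have [E3 _] := Iinf_plus _ _ 0 t (contR_mult _ _ _ (contR_const 2 0) sq_cont')
       (contR_mult _ _ _ (contR_const (32 * psi M t) 0) psi_cont') ltac:(lra) E1 E2.
    exact: E3.
  have Hb : forall x, t <= x -> Rabs (qk M K.+1 x) <= g x.
    move=> x Hx; apply: Rle_trans (Hpt x ltac:(lra)) _.
    rewrite /g /sqI.
    have P1 := psi_ge0' x ltac:(lra).
    have P2 := psi_nonincr' t x ltac:(lra) Hx.
    have E : Rabs (Iinf M x) ^ 2 = Iinf M x ^ 2 by rewrite pow2_abs.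
    have Q1 : (Rabs (Iinf M x) + 4 * psi M x) ^ 2 <= 2 * Rabs (Iinf M x) ^ 2 + 32 * (psi M x * psi M x).
      have := pow2_ge_0 (Rabs (Iinf M x) - 4 * psi M x); nra.
    have Q2 : psi M x * psi M x <= psi M t * psi M x by nra.
    lra.
  split.
    exact: (Iinf_compare _ g a t Hc Hgc Ht Hb Hgex).
  apply: (Iinf_compare _ g a t (contR_abs _ _ Hc) Hgc Ht) => //.
  move=> x Hx; rewrite Rabs_Rabsolu; exact: Hb.
have HG1 : Good K.+1.
  move=> k Hk1 Hk2; case: (leqP k K) => Hk.
    exact: HG.
  have -> : k = K.+1 by lia.
  by split.
split => //.
move=> t Ht.
set D := fun x => Gf M x - SK M K.+1 x.
set dD := fun x => (3 / 2 * (- sqI M x) + 48 * (- sqI M x * Phi M x + psi M x * (- psi M x))) -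
   fsum (fun k => 2 ^ (k - 2) * (- Rabs (qk M k x))) 2 K.
have Hd : forall x, a < x -> is_derive D x (dD x).
  move=> x Hx; rewrite /D /dD /Gf /SK.
  have -> : (K.+1 - 1 = K)%N by lia.
  apply: isd_minus.
    apply: isd_plus; first (apply: isd_scal; apply: psi_deriv'; lra).
    apply: isd_scal; apply: isd_mult; [apply: psi_deriv'; lra|apply: Phi_deriv'; lra].
  apply: (fsum_deriv (fun k y => 2 ^ (k - 2) * mk M k y) (fun k y => 2 ^ (k - 2) * (- Rabs (qk M k y)))).
  move=> i H1 H2; apply: isd_scal; apply: (m_deriv K.+1) => //; lia.
have Hdn : forall x, a < x -> dD x <= 0.
  move=> x Hx; rewrite /dD.
  have -> : fsum (fun k => 2 ^ (k - 2) * - Rabs (qk M k x)) 2 K =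
            -1 * fsum (fun k => 2 ^ (k - 2) * Rabs (qk M k x)) 2 K.
    rewrite fsum_mulr; apply: fsum_ext => i _ _; ring.
  have X := Xbound K HK HG HB x Hx.
  have P1 := psi_ge0' x ltac:(lra).
  have P3 := Phi_ge0' x ltac:(lra).
  have S0 : 0 <= sqI M x by rewrite /sqI; apply: pow2_ge_0.
  have E : Rabs (Iinf M x) ^ 2 = sqI M x by rewrite /sqI pow2_abs.
  have Q1 : (Rabs (Iinf M x) + 4 * psi M x) ^ 2 <= 3 / 2 * Rabs (Iinf M x) ^ 2 + 48 * (psi M x * psi M x).
    have := pow2_ge_0 (Rabs (Iinf M x) - 8 * psi M x); nra.
  have Q2 : 0 <= sqI M x * Phi M x by apply: Rmult_le_pos.
  lra.
suff : 0 <= D t by rewrite /D; lra.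
apply: (nonincr_lim0 D t).
  move=> x y Hx Hy; apply: (deriv_nonincr D dD a x y Hd Hdn) => //; lra.
have LG : filterlim (Gf M) (Rbar_locally p_infty) (locally 0).
  have := lim_plus _ _ _ _ (lim_mult _ _ _ _ (lim_const (3/2)) psi_to0')
     (lim_mult _ _ _ _ (lim_const 48) (lim_mult _ _ _ _ psi_to0' Phi_to0')).
  rewrite !Rmult_0_r Rplus_0_r; exact.
have LS : filterlim (SK M K.+1) (Rbar_locally p_infty) (locally 0).
  rewrite /SK; apply: fsum_lim0 => i H1 H2.
  have := lim_mult (F:=Rbar_locally p_infty) _ _ _ _ (lim_const (2 ^ (i - 2))) (m_to0 K.+1 HG1 i ltac:(lia) ltac:(lia)).
  rewrite Rmult_0_r; exact.
have := lim_minus _ _ _ _ LG LS.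
rewrite Rminus_0_r; exact.
Qed.

Lemma all_good K : (1 <= K)%N -> Good K /\ Bound K.
Proof.
elim: K => [|K IH] HK; first lia.
case: (ltnP 0 K) => H0.
  have [H1 H2] := IH H0; exact: step.
have -> : K.+1 = 1%N by lia.
split; first by move=> k H1 H2; lia.
move=> t Ht; rewrite /SK (_ : (1 - 1 = 0)%N) // fsum0 /Gf.
have P1 := psi_ge0' t ltac:(lra).
have P3 := Phi_ge0' t ltac:(lra).
have : 0 <= psi M t * Phi M t by apply: Rmult_le_pos.
lra.
Qed.

Lemma Qk_bound k t : (2 <= k)%N -> a < t -> 2 ^ (k - 2) * Rabs (Qk M k t) <= 2 * psi M t.
Proof.
move=> Hk Ht.
have [HG HB] := all_good k ltac:(lia).
have H1 := Qabs_m k HG k t Hk (leqnn k) Ht.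
have H2 := HB t Ht; have H3 := G_le t Ht.
have H4 : 2 ^ (k - 2) * mk M k t <= SK M k t.
  rewrite /SK; have -> : (k - 1 = (k - 2).+1)%N by lia.
  rewrite fsum_last; have -> : (2 + (k - 2) = k)%N by lia.
  have : 0 <= fsum (fun k0 => 2 ^ (k0 - 2) * mk M k0 t) 2 (k - 2).
    apply: fsum_ge0 => i H5 H6; apply: Rmult_le_pos; first (apply: pow_le; lra).
    have [HG' _] := all_good i ltac:(lia).
    apply: Rle_trans (Rabs_pos (Qk M i t)) _; apply: (Qabs_m i HG' i t) => //; lia.
  lra.
have : 0 <= 2 ^ (k - 2) by apply: pow_le; lra.
nra.
Qed.

Lemma btail n t : a < t -> Rabs (fsum (fun k => Qk M k t) 2 n) <= 2 * psi M t.
Proof.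
move=> Ht.
have [HG HB] := all_good n.+1 ltac:(lia).
apply: Rle_trans (fsum_abs _ _ _) _.
apply: Rle_trans (_ : _ <= SK M n.+1 t) _; last by have := HB t Ht; have := G_le t Ht; lra.
rewrite /SK; have -> : (n.+1 - 1 = n)%N by lia.
apply: fsum_le => i H1 H2.
have := Qabs_m n.+1 HG i t H1 ltac:(lia) Ht.
have : 1 <= 2 ^ (i - 2) by apply: pow_R1_Rle; lra.
have := Rabs_pos (Qk M i t).
nra.
Qed.

Lemma bK_deriv K x : (1 <= K)%N -> a < x ->
  is_derive (fun y => fsum (fun k => Qk M k y) 1 K) x (fsum (fun k => qk M k x) 1 K).
Proof.
move=> HK Hx.
have [HG _] := all_good K HK.
apply: (fsum_deriv (fun k y => Qk M k y) (fun k y => qk M k y)) => i H1 H2.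
apply: (proj2 (Qgood K HG i _ _)) => //; lia.
Qed.

Lemma bK_cont K : (1 <= K)%N -> contR (fun y => fsum (fun k => Qk M k y) 1 K) a.
Proof.
move=> HK; apply: (contR_deriv _ (fun x => fsum (fun k => qk M k x) 1 K)) => x Hx.
exact: bK_deriv.
Qed.

Lemma bK_dbound K x : (1 <= K)%N -> a < x ->
  Rabs (fsum (fun k => qk M k x) 1 K) <= Rabs (M x) + (Rabs (Iinf M x) + 4 * psi M x) ^ 2.
Proof.
move=> HK Hx.
have -> : K = (K - 1).+1 by lia.
rewrite fsum_S qk_1; apply: Rle_trans (Rabs_triang _ _) _.
apply: Rplus_le_compat_l.
case: (ltnP 1 K) => H.
  have [HG HB] := all_good (K - 1) ltac:(lia).
  have X := Xbound (K - 1) ltac:(lia) HG HB x Hx.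
  apply: Rle_trans (fsum_abs _ _ _) _; apply: Rle_trans X.
  apply: fsum_le => i H1 H2.
  have : 1 <= 2 ^ (i - 2) by apply: pow_R1_Rle; lra.
  have := Rabs_pos (qk M i x); nra.
have -> : (K - 1 = 0)%N by lia.
rewrite fsum0 Rabs_R0; apply: pow2_ge_0.
Qed.
End Induct.

Lemma sum_n_fsum (F : nat -> R) n : sum_n (fun i => F i.+1) n = fsum F 1 n.+1.
Proof.
elim: n => [|n IH].
  by rewrite sum_O /fsum /=; ring.
rewrite sum_Sn IH [X in _ = X]fsum_last /plus /=; have -> : (1 + n.+1 = n.+2)%N by lia. done.
Qed.

#[global] Instance Filter_ev : Filter eventually := @filter_filter _ _ eventually_filter.

Lemma abs_le_elim x y : Rabs x <= y -> - y <= x /\ x <= y.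
Proof. move=> H; have := Rle_abs x; have := Rle_abs (- x); rewrite Rabs_Ropp; lra. Qed.

Lemma geom_tail (a : nat -> R) c : 0 <= c -> (forall i, (1 <= i)%N -> Rabs (a i) <= c * (1/2) ^ i) ->
  forall n, Rabs (Series a - sum_n a n) <= c * (1/2) ^ n.
Proof.
move=> Hc Ha n.
have Hex : ex_series a.
  apply/ex_series_incr_1.
  apply: (ex_series_le _ (fun k => c * (1/2) ^ k)).
    move=> k; rewrite /norm /= /abs /=.
    apply: Rle_trans (Ha k.+1 ltac:(lia)) _.
    apply: Rmult_le_compat_l => //; rewrite /= ; have := pow_le (1/2) k ltac:(lra); lra.
  apply: ex_series_scal_l; apply: ex_series_geom; rewrite Rabs_pos_eq; lra.
have Hs := Series_correct a Hex.
have Hm : forall m, (n <= m)%N -> Rabs (sum_n a m - sum_n a n) <= c * (1/2) ^ n - c * (1/2) ^ m.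
  elim => [|m IH] Hnm.
    have -> : n = 0%N by lia. rewrite Rminus_diag Rabs_R0; lra.
  case: (leqP n m) => H.
    rewrite sum_Sn /plus /=.
    have := IH H; have := Ha m.+1 ltac:(lia); rewrite /=.
    move=> H1 H2.
    have := Rabs_triang (sum_n a m - sum_n a n) (a m.+1).
    have -> : sum_n a m - sum_n a n + a m.+1 = sum_n a m + a m.+1 - sum_n a n by ring.
    lra.
  have -> : n = m.+1 by lia. rewrite Rminus_diag Rabs_R0; lra.
have Hp : forall m, 0 <= c * (1/2) ^ m by move=> m; apply: Rmult_le_pos => //; apply: pow_le; lra.
have PE : ProperFilter' eventually := Proper_StrongProper _ eventually_filter.
have Ev1 : eventually (fun m => sum_n a m <= sum_n a n + c * (1/2) ^ n).
  exists n => m Hm'; have := Hm m ltac:(lia); have := Hp m; move=> ? /abs_le_elim; lra.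
have Ev2 : eventually (fun m => sum_n a n - c * (1/2) ^ n <= sum_n a m).
  exists n => m Hm'; have := Hm m ltac:(lia); have := Hp m; move=> ? /abs_le_elim; lra.
have E1 := filterlim_le (F := eventually) (fun m => sum_n a m) (fun _ => sum_n a n + c * (1/2) ^ n)
  (Series a) (sum_n a n + c * (1/2) ^ n) Ev1 Hs (lim_const (F:=eventually) _).
have E2 := filterlim_le (F := eventually) (fun _ => sum_n a n - c * (1/2) ^ n) (fun m => sum_n a m)
  (sum_n a n - c * (1/2) ^ n) (Series a) Ev2 (lim_const (F:=eventually) _) Hs.
simpl in E1, E2.
have E1' := E1 PE Filter_ev; have E2' := E2 PE Filter_ev.
apply: Rabs_le; lra.
Qed.

Lemma within_loc_eq (T tau : R) : T < tau -> within (fun x => T <= x) (locally tau) = locally tau.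
Proof.
move=> H; apply: functional_extensionality => P; apply: propositional_extensionality; split.
- move=> HP.
  have HP' : locally tau (fun x => T <= x -> P x) := HP.
  apply: filter_imp (filter_and _ _ HP' (loc_gt T tau H)) => x [H1 H2]; apply: H1; lra.
- move=> HP; rewrite /within; apply: filter_imp HP => x Hx _; exact: Hx.
Qed.

Lemma fd_fst (F : (R -> Prop) -> Prop) {FF : Filter F} (f : R -> C) (d : C) :
  filterdiff (K := R_AbsRing) (U := R_NormedModule) (V := C_R_NormedModule) f F (fun h => scal h d) ->
  filterdiff (K := R_AbsRing) (U := R_NormedModule) (V := R_NormedModule) (fun t => fst (f t)) F (fun h => scal h (fst d)).
Proof.
move=> H.
have L : is_linear (K := R_AbsRing) (U := C_R_NormedModule) (V := R_NormedModule) (fun z : C => fst z).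
  exact: (is_linear_fst (K := R_AbsRing) (U := R_NormedModule) (V := R_NormedModule)).
have := filterdiff_comp f (fun z : C => fst z) _ _ H (filterdiff_linear _ L).
move/(_ FF) => H2.
apply: (filterdiff_ext_lin _ _ _ H2) => y; by [].
Qed.

Lemma fd_snd (F : (R -> Prop) -> Prop) {FF : Filter F} (f : R -> C) (d : C) :
  filterdiff (K := R_AbsRing) (U := R_NormedModule) (V := C_R_NormedModule) f F (fun h => scal h d) ->
  filterdiff (K := R_AbsRing) (U := R_NormedModule) (V := R_NormedModule) (fun t => snd (f t)) F (fun h => scal h (snd d)).
Proof.
move=> H.
have L : is_linear (K := R_AbsRing) (U := C_R_NormedModule) (V := R_NormedModule) (fun z : C => snd z).
  exact: (is_linear_snd (K := R_AbsRing) (U := R_NormedModule) (V := R_NormedModule)).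
have := filterdiff_comp f (fun z : C => snd z) _ _ H (filterdiff_linear _ L).
move/(_ FF) => H2.
apply: (filterdiff_ext_lin _ _ _ H2) => y; by [].
Qed.

Lemma fd_cont (D : R -> Prop) (tau : R) (g : R -> R) (d : R) :
  filterdiff (K := R_AbsRing) (U := R_NormedModule) (V := R_NormedModule) g (within D (locally tau)) (fun h => scal h d) ->
  filterlim g (within D (locally tau)) (locally (g tau)).
Proof.
move=> [_ H].
have Hl : is_filter_lim (within D (locally tau)) tau.
  move=> P HP; apply: filter_imp HP => x Hx _; exact: Hx.
have H1 := H tau Hl (mkposreal 1 Rlt_0_1).
apply/filterlim_locally => eps.
have Hd : 0 < eps / (1 + Rabs d).
  apply: Rdiv_lt_0_compat; [exact: cond_pos|have := Rabs_pos d; lra].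
have H2 : within D (locally tau) (fun y => Rabs (y - tau) < eps / (1 + Rabs d)).
  move=> /=; exists (mkposreal _ Hd) => y /ball_R' Hy _; exact: Hy.
apply: filter_imp (filter_and _ _ H1 H2) => y [Hy1 Hy2]; apply: ball_R.
move: Hy1; rewrite /norm /= /abs /minus /plus /opp /scal /= /mult /= => Hy1.
have E : g y - g tau = (g y + - g tau + - ((y + - tau) * d)) + (y - tau) * d by ring.
rewrite E; apply: Rle_lt_trans (Rabs_triang _ _) _.
rewrite Rabs_mult.
have Hp := Rabs_pos (y - tau); have Hq := Rabs_pos d.
have : Rabs (y - tau) * (1 + Rabs d) < eps.
  have := Rmult_lt_compat_r (1 + Rabs d) _ _ ltac:(lra) Hy2.
  rewrite /Rdiv Rmult_assoc Rinv_l ?Rmult_1_r; [done|lra].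
have : Rabs (y + - tau) = Rabs (y - tau) by [].
nra.
Qed.

Lemma key_ineq (u1 u2 v1 v2 b bk dbk q1 r ps gg eps : R) : 0 < r -> 0 <= eps ->
  Rabs (b - bk) <= eps -> 2 * Rabs bk <= r -> Rabs (bk - q1) <= 2 * ps -> Rabs dbk <= r * gg ->
  let E := u1 ^ 2 + u2 ^ 2 + v1 ^ 2 + v2 ^ 2 in
  let IP := u2 * v1 - u1 * v2 in
  let du1 := -2 * b * u1 - r * v2 in
  let du2 := -2 * b * u2 + r * v1 in
  let dv1 := - r * u2 in
  let dv2 := r * u1 in
  let dE := 2 * (u1 * du1 + u2 * du2 + v1 * dv1 + v2 * dv2) in
  let dIP := du2 * v1 + u2 * dv1 - du1 * v2 - u1 * dv2 in
  let V := E - 2 * bk * IP / r in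
  let dV := dE - 2 * (dbk * IP + bk * dIP) / r in
  let h := 4 * ps + 10 * eps + 2 * gg in
  dV + V * (2 * q1 - h) <= 0 /\ 0 <= dV + V * (2 * q1 + h) /\ E / 2 <= V /\ V <= 3 * E / 2.
Proof.
move=> Hr He Hb Hbk Hq Hd E IP du1 du2 dv1 dv2 dE dIP V dV h.
set e := b - bk.
set X := u1 ^ 2 + u2 ^ 2.
have HX0 : 0 <= X by rewrite /X; nra.
have HXE : X <= E by rewrite /X /E; nra.
have HIP : Rabs IP <= E / 2.
  apply: Rabs_le; rewrite /IP /E; split.
    have := pow2_ge_0 (u2 + v1); have := pow2_ge_0 (u1 - v2); lra.
  have := pow2_ge_0 (u2 - v1); have := pow2_ge_0 (u1 + v2); lra.
have HIP0 := Rabs_pos IP.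
have Hbr : Rabs bk / r <= 1 / 2.
  apply: (Rmult_le_reg_r r) => //; rewrite /Rdiv Rmult_assoc Rinv_l; lra.
have Hbr0 : 0 <= Rabs bk / r by apply: Rdiv_le_0_compat; [apply: Rabs_pos|lra].
have Hdr : Rabs dbk / r <= gg.
  apply: (Rmult_le_reg_r r) => //; rewrite /Rdiv Rmult_assoc Rinv_l; lra.
have Hdr0 : 0 <= Rabs dbk / r by apply: Rdiv_le_0_compat; [apply: Rabs_pos|lra].
have Ae : Rabs e <= eps by [].
have Ae0 := Rabs_pos e.
have ID : forall sg, dV + V * (2 * q1 + sg * h) =
   V * (2 * q1 - 2 * bk + sg * h) - 4 * e * X + 4 * e * (bk / r) * IP - 2 * (dbk / r) * IP.
  move=> sg; rewrite /dV /V /dE /dIP /du1 /du2 /dv1 /dv2 /IP /X /E /e; field; lra.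
have T1 : Rabs (4 * e * X) <= 4 * eps * E.
  rewrite (Rabs_mult (4 * e) X) (Rabs_mult 4 e) (Rabs_pos_eq 4) ?(Rabs_pos_eq X) //; try lra.
  have : Rabs e * X <= eps * E by apply: Rmult_le_compat.
  lra.
have T2 : Rabs (4 * e * (bk / r) * IP) <= eps * E.
  rewrite (Rabs_mult (4 * e * (bk / r)) IP) (Rabs_mult (4 * e) (bk / r)) (Rabs_mult 4 e) (Rabs_pos_eq 4); last lra.
  rewrite /Rdiv (Rabs_mult bk (/ r)) Rabs_inv (Rabs_pos_eq r); last lra.
  rewrite -/(Rdiv (Rabs bk) r).
  have : Rabs e * (Rabs bk / r) <= eps * (1 / 2) by apply: Rmult_le_compat.
  have : 0 <= Rabs e * (Rabs bk / r) by apply: Rmult_le_pos.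
  move=> H1 H2.
  have : Rabs e * (Rabs bk / r) * Rabs IP <= eps * (1 / 2) * (E / 2) by apply: Rmult_le_compat.
  lra.
have T3 : Rabs (2 * (dbk / r) * IP) <= gg * E.
  rewrite (Rabs_mult (2 * (dbk / r)) IP) (Rabs_mult 2 (dbk / r)) (Rabs_pos_eq 2); last lra.
  rewrite /Rdiv (Rabs_mult dbk (/ r)) Rabs_inv (Rabs_pos_eq r); last lra.
  rewrite -/(Rdiv (Rabs dbk) r).
  have : Rabs dbk / r * Rabs IP <= gg * (E / 2) by apply: Rmult_le_compat.
  lra.
have HV1 : E / 2 <= V.
  have : Rabs (2 * bk * IP / r) <= E / 2.
    rewrite /Rdiv (Rabs_mult (2 * bk * IP) (/ r)) (Rabs_mult (2 * bk) IP) (Rabs_mult 2 bk) Rabs_inv (Rabs_pos_eq 2) ?(Rabs_pos_eq r); try lra.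
    have : Rabs bk * / r * Rabs IP <= 1 / 2 * (E / 2) by apply: Rmult_le_compat.
    lra.
  move/abs_le_elim; rewrite /V; lra.
have HV2 : V <= 3 * E / 2.
  have : Rabs (2 * bk * IP / r) <= E / 2.
    rewrite /Rdiv (Rabs_mult (2 * bk * IP) (/ r)) (Rabs_mult (2 * bk) IP) (Rabs_mult 2 bk) Rabs_inv (Rabs_pos_eq 2) ?(Rabs_pos_eq r); try lra.
    have : Rabs bk * / r * Rabs IP <= 1 / 2 * (E / 2) by apply: Rmult_le_compat.
    lra.
  move/abs_le_elim; rewrite /V; lra.
have Hq' := abs_le_elim _ _ Hq.
have Hgg : 0 <= gg by have := Rabs_pos dbk; nra.
move: (abs_le_elim _ _ T1) (abs_le_elim _ _ T2) (abs_le_elim _ _ T3) => [A1 A2] [B1 B2] [C1 C2].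
have V0 : 0 <= V by lra.
split.
  have := ID (-1); rewrite (_ : 2 * q1 + -1 * h = 2 * q1 - h); last ring.
  move=> ->.
  have : V * (2 * q1 - 2 * bk + -1 * h) <= V * (- 10 * eps - 2 * gg).
    apply: Rmult_le_compat_l => //; rewrite /h; lra.
  have : 0 <= (V - E / 2) * (10 * eps + 2 * gg) by apply: Rmult_le_pos; lra.
  lra.
split; last by split.
have := ID 1; rewrite (_ : 2 * q1 + 1 * h = 2 * q1 + h); last ring.
move=> ->.
have : V * (10 * eps + 2 * gg) <= V * (2 * q1 - 2 * bk + 1 * h).
  apply: Rmult_le_compat_l => //; rewrite /h; lra.
have : E / 2 * (10 * eps + 2 * gg) <= V * (10 * eps + 2 * gg).
  apply: Rmult_le_compat_r; lra.
lra.
Qed.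

Lemma deriv_nonincr_int (f df : R -> R) x y : x <= y ->
  (forall z, x <= z <= y -> is_derive f z (df z)) -> (forall z, x <= z <= y -> df z <= 0) -> f y <= f x.
Proof.
move=> Hxy Hd Hn.
case: (MVT_gen f x y df).
- move=> z [Hz1 Hz2]; apply: Hd; move: Hz1 Hz2; rewrite /Rmin /Rmax; case: Rle_dec; lra.
- move=> z [Hz1 Hz2]; apply/continuity_pt_filterlim; apply: ex_derive_continuous.
  exists (df z); apply: Hd; move: Hz1 Hz2; rewrite /Rmin /Rmax; case: Rle_dec; lra.
move=> c [[Hc1 Hc2] E].
have Hc : x <= c <= y by move: Hc1 Hc2; rewrite /Rmin /Rmax; case: Rle_dec; lra.
have := Hn c Hc; have : 0 <= y - x by lra.
move=> H1 H2; have : df c * (y - x) <= 0 by apply: Rmult_le_0_r.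
lra.
Qed.

Definition wu1 (W : R -> C * C) t := fst (fst (W t)).
Definition wu2 (W : R -> C * C) t := snd (fst (W t)).
Definition wv1 (W : R -> C * C) t := fst (snd (W t)).
Definition wv2 (W : R -> C * C) t := snd (snd (W t)).
Definition Een W t := wu1 W t * wu1 W t + wu2 W t * wu2 W t + wv1 W t * wv1 W t + wv2 W t * wv2 W t.
Definition IPf W t := wu2 W t * wv1 W t - wu1 W t * wv2 W t.

#[global] Instance Filter_within (D : R -> Prop) (x : R) : Filter (within D (locally x)) :=
  within_filter R D (locally x) (Filter_loc x).

Section Energy.
Variables (T r : R) (W : R -> C * C) (b : R -> R).
Hypothesis Hr : 0 < r.
Hypothesis Hsol : solves_W b r T W.

Lemma W_derivs tau : T < tau ->
  is_derive (wu1 W) tau (-2 * b tau * wu1 W tau - r * wv2 W tau) /\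
  is_derive (wu2 W) tau (-2 * b tau * wu2 W tau + r * wv1 W tau) /\
  is_derive (wv1 W) tau (- r * wu2 W tau) /\
  is_derive (wv2 W) tau (r * wu1 W tau).
Proof.
move=> Ht; case: Hsol => H1 H2.
have F1 := H1 tau (Rlt_le _ _ Ht); have F2 := H2 tau (Rlt_le _ _ Ht).
rewrite within_loc_eq // in F1 F2.
have G1 := fd_fst _ _ _ F1; have G2 := fd_snd _ _ _ F1.
have G3 := fd_fst _ _ _ F2; have G4 := fd_snd _ _ _ F2.
split; [|split; [|split]].
- apply: isd_eq; first exact: G1. rewrite /wu1 /wv2 /=; ring.
- apply: isd_eq; first exact: G2. rewrite /wu2 /wv1 /=; ring.
- apply: isd_eq; first exact: G3. rewrite /wu2 /=; ring.
- apply: isd_eq; first exact: G4. rewrite /wu1 /=; ring.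
Qed.

Lemma W_cont tau : T <= tau ->
  filterlim (Een W) (within (fun x => T <= x) (locally tau)) (locally (Een W tau)).
Proof.
move=> Ht; case: Hsol => H1 H2.
have F1 := H1 tau Ht; have F2 := H2 tau Ht.
have FW := within_filter R (fun x => T <= x) _ (Filter_loc tau).
have C1 := fd_cont _ _ _ _ (@fd_fst _ FW _ _ F1).
have C2 := fd_cont _ _ _ _ (@fd_snd _ FW _ _ F1).
have C3 := fd_cont _ _ _ _ (@fd_fst _ FW _ _ F2).
have C4 := fd_cont _ _ _ _ (@fd_snd _ FW _ _ F2).
have := @lim_plus _ _ FW _ _ _ _ (@lim_plus _ _ FW _ _ _ _ (lim_plus _ _ _ _ (lim_mult _ _ _ _ C1 C1)
   (lim_mult _ _ _ _ C2 C2)) (lim_mult _ _ _ _ C3 C3)) (lim_mult _ _ _ _ C4 C4).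
exact.
Qed.

Lemma Een_deriv tau : T < tau ->
  is_derive (Een W) tau (2 * (wu1 W tau * (-2 * b tau * wu1 W tau - r * wv2 W tau) +
     wu2 W tau * (-2 * b tau * wu2 W tau + r * wv1 W tau) + wv1 W tau * (- r * wu2 W tau) +
     wv2 W tau * (r * wu1 W tau))).
Proof.
move=> Ht; have [D1 [D2 [D3 D4]]] := W_derivs tau Ht.
rewrite /Een; apply: isd_eq.
  apply: isd_plus; [apply: isd_plus; [apply: isd_plus|]|]; apply: isd_mult; eassumption.
ring.
Qed.

Lemma IP_deriv tau : T < tau ->
  is_derive (IPf W) tau ((-2 * b tau * wu2 W tau + r * wv1 W tau) * wv1 W tau + wu2 W tau * (- r * wu2 W tau)
     - (-2 * b tau * wu1 W tau - r * wv2 W tau) * wv2 W tau - wu1 W tau * (r * wu1 W tau)).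
Proof.
move=> Ht; have [D1 [D2 [D3 D4]]] := W_derivs tau Ht.
rewrite /IPf; apply: isd_eq.
  apply: isd_minus; apply: isd_mult; eassumption.
ring.
Qed.

Variables (s t : R) (bk dbk q1 A ps Ph Gg gg : R -> R) (eps : R).
Hypothesis Hs : T <= s.
Hypothesis Hst : s < t.
Hypothesis Heps : 0 <= eps.
Hypothesis Hbk : forall z, s < z <= t -> is_derive bk z (dbk z).
Hypothesis HA : forall z, s < z <= t -> is_derive A z (- q1 z).
Hypothesis HPh : forall z, s < z <= t -> is_derive Ph z (- ps z).
Hypothesis HGg : forall z, s < z <= t -> is_derive Gg z (gg z).
Hypothesis C1 : forall z, s < z <= t -> Rabs (b z - bk z) <= eps.
Hypothesis C2 : forall z, s < z <= t -> 2 * Rabs (bk z) <= r.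
Hypothesis C3 : forall z, s < z <= t -> Rabs (bk z - q1 z) <= 2 * ps z.
Hypothesis C4 : forall z, s < z <= t -> Rabs (dbk z) <= r * gg z.

Definition Hfun z := -4 * Ph z + 10 * eps * z + 2 * Gg z.
Definition Vfun z := Een W z - 2 / r * (bk z * IPf W z).

Lemma H_deriv z : s < z <= t -> is_derive Hfun z (4 * ps z + 10 * eps + 2 * gg z).
Proof.
move=> Hz; rewrite /Hfun; apply: isd_eq.
  apply: isd_plus; [apply: isd_plus|].
  - apply: isd_scal; exact: HPh.
  - apply: isd_scal; exact: isd_id.
  - apply: isd_scal; exact: HGg.
ring.
Qed.

Lemma mono_main s' : s < s' < t ->
  Een W t <= 3 * Een W s' * exp (2 * (A t - A s') + (Hfun t - Hfun s')) /\ Een W s' <= 3 * Een W t * exp (2 * (A s' - A t) + (Hfun t - Hfun s')).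
Proof.
move=> Hs'.
pose dV z := 2 * (wu1 W z * (-2 * b z * wu1 W z - r * wv2 W z) +
     wu2 W z * (-2 * b z * wu2 W z + r * wv1 W z) + wv1 W z * (- r * wu2 W z) +
     wv2 W z * (r * wu1 W z)) - 2 / r * (dbk z * IPf W z + bk z *
     ((-2 * b z * wu2 W z + r * wv1 W z) * wv1 W z + wu2 W z * (- r * wu2 W z)
     - (-2 * b z * wu1 W z - r * wv2 W z) * wv2 W z - wu1 W z * (r * wu1 W z))).
have HV : forall z, s < z <= t -> is_derive Vfun z (dV z).
  move=> z Hz; rewrite /Vfun /dV; apply: isd_minus.
    apply: Een_deriv; lra.
  apply: isd_scal; apply: isd_mult; [exact: Hbk|apply: IP_deriv; lra].
have KI : forall z, s < z <= t ->
  dV z + Vfun z * (2 * q1 z - (4 * ps z + 10 * eps + 2 * gg z)) <= 0 /\ 0 <= dV z + Vfun z * (2 * q1 z + (4 * ps z + 10 * eps + 2 * gg z)) /\ Een W z / 2 <= Vfun z /\ Vfun z <= 3 * Een W z / 2.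
  move=> z Hz.
  have := key_ineq (wu1 W z) (wu2 W z) (wv1 W z) (wv2 W z) (b z) (bk z) (dbk z) (q1 z) r (ps z) (gg z) eps
     Hr Heps (C1 z Hz) (C2 z Hz) (C3 z Hz) (C4 z Hz).
  have E1 : dV z = 2 * (wu1 W z * (-2 * b z * wu1 W z - r * wv2 W z) +
     wu2 W z * (-2 * b z * wu2 W z + r * wv1 W z) + wv1 W z * (- r * wu2 W z) +
     wv2 W z * (r * wu1 W z)) - 2 * (dbk z * (wu2 W z * wv1 W z - wu1 W z * wv2 W z) + bk z *
     ((-2 * b z * wu2 W z + r * wv1 W z) * wv1 W z + wu2 W z * (- r * wu2 W z)
     - (-2 * b z * wu1 W z - r * wv2 W z) * wv2 W z - wu1 W z * (r * wu1 W z))) / r.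
    rewrite /dV /IPf; field; lra.
  have E2 : Vfun z = wu1 W z ^ 2 + wu2 W z ^ 2 + wv1 W z ^ 2 + wv2 W z ^ 2 -
     2 * bk z * (wu2 W z * wv1 W z - wu1 W z * wv2 W z) / r.
    rewrite /Vfun /Een /IPf; field; lra.
  have E3 : Een W z = wu1 W z ^ 2 + wu2 W z ^ 2 + wv1 W z ^ 2 + wv2 W z ^ 2.
    rewrite /Een; ring.
  rewrite E1 E2 E3 /=; exact.
pose f1 z := - 2 * A z - Hfun z.
pose Y1 z := Vfun z * exp (f1 z).
have HY1 : forall z, s' <= z <= t -> is_derive Y1 z
    (dV z * exp (f1 z) + Vfun z * ((-2 * - q1 z - (4 * ps z + 10 * eps + 2 * gg z)) * exp (f1 z))).
  move=> z Hz; rewrite /Y1; apply: isd_mult; first (apply: HV; lra).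
  apply: isd_exp; rewrite /f1; apply: isd_minus; [apply: isd_scal; apply: HA; lra|apply: H_deriv; lra].
have M1 : Y1 t <= Y1 s'.
  apply: (deriv_nonincr_int Y1 _ s' t ltac:(lra) HY1) => z Hz.
  have [K1 _] := KI z ltac:(lra).
  have Ep := exp_pos (f1 z).
  have -> : dV z * exp (f1 z) + Vfun z * ((-2 * - q1 z - (4 * ps z + 10 * eps + 2 * gg z)) * exp (f1 z)) =
    exp (f1 z) * (dV z + Vfun z * (2 * q1 z - (4 * ps z + 10 * eps + 2 * gg z))) by ring.
  nra.
pose f2 z := - 2 * A z + Hfun z.
pose Y2 z := - (Vfun z * exp (f2 z)).
have HY2 : forall z, s' <= z <= t -> is_derive Y2 z
    (- (dV z * exp (f2 z) + Vfun z * ((-2 * - q1 z + (4 * ps z + 10 * eps + 2 * gg z)) * exp (f2 z)))).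
  move=> z Hz; rewrite /Y2; apply: isd_opp; apply: isd_mult; first (apply: HV; lra).
  apply: isd_exp; rewrite /f2; apply: isd_plus; [apply: isd_scal; apply: HA; lra|apply: H_deriv; lra].
have M2 : Y2 t <= Y2 s'.
  apply: (deriv_nonincr_int Y2 _ s' t ltac:(lra) HY2) => z Hz.
  have [_ [K2 _]] := KI z ltac:(lra).
  have Ep := exp_pos (f2 z).
  have -> : dV z * exp (f2 z) + Vfun z * ((-2 * - q1 z + (4 * ps z + 10 * eps + 2 * gg z)) * exp (f2 z)) =
    exp (f2 z) * (dV z + Vfun z * (2 * q1 z + (4 * ps z + 10 * eps + 2 * gg z))) by ring.
  nra.
have [_ [_ [Vt1 Vt2]]] := KI t ltac:(lra).
have [_ [_ [Vs1 Vs2]]] := KI s' ltac:(lra).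
rewrite /Y1 /Y2 in M1 M2.
have Et0 : 0 <= Een W t by rewrite /Een; nra.
have Es0 : 0 <= Een W s' by rewrite /Een; nra.
split.
- have E : exp (2 * (A t - A s') + (Hfun t - Hfun s')) = exp (f1 s') * / exp (f1 t).
    rewrite -exp_Ropp -exp_plus /f1; congr exp; ring.
  rewrite E.
  have Hf := exp_pos (f1 t); have Hf' := exp_pos (f1 s').
  have : Vfun t <= Vfun s' * exp (f1 s') * / exp (f1 t).
    apply: (Rmult_le_reg_r (exp (f1 t))) => //.
    rewrite Rmult_assoc Rinv_l; lra.
  have HX : 0 <= exp (f1 s') * / exp (f1 t) by apply: Rmult_le_pos; [lra|apply: Rlt_le; apply: Rinv_0_lt_compat].
  rewrite Rmult_assoc => H.
  have := Rmult_le_compat_r _ _ _ HX Vs2.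
  lra.
- have E : exp (2 * (A s' - A t) + (Hfun t - Hfun s')) = exp (f2 t) * / exp (f2 s').
    rewrite -exp_Ropp -exp_plus /f2; congr exp; ring.
  rewrite E.
  have Hf := exp_pos (f2 t); have Hf' := exp_pos (f2 s').
  have : Vfun s' <= Vfun t * exp (f2 t) * / exp (f2 s').
    apply: (Rmult_le_reg_r (exp (f2 s'))) => //.
    rewrite Rmult_assoc Rinv_l; lra.
  have HX : 0 <= exp (f2 t) * / exp (f2 s') by apply: Rmult_le_pos; [lra|apply: Rlt_le; apply: Rinv_0_lt_compat].
  rewrite Rmult_assoc => H.
  have := Rmult_le_compat_r _ _ _ HX Vt2.
  lra.
Qed.
End Energy.

Lemma exp_mono x y : x <= y -> exp x <= exp y.
Proof. case/Rle_lt_or_eq_dec => H; [apply: Rlt_le; exact: exp_increasing|rewrite H; lra]. Qed.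

Lemma rp_pos x y : 0 < Rpower x y.
Proof. rewrite /Rpower; exact: exp_pos. Qed.

Lemma rp_anti_base x1 x2 y : y <= 0 -> 0 < x1 <= x2 -> Rpower x2 y <= Rpower x1 y.
Proof.
move=> Hy [H1 H2]; rewrite /Rpower; apply: exp_mono.
have := ln_le _ _ H1 H2; nra.
Qed.

Lemma rp_mono_base x1 x2 y : 0 <= y -> 0 < x1 <= x2 -> Rpower x1 y <= Rpower x2 y.
Proof. move=> Hy H; exact: Rle_Rpower_l. Qed.

Lemma rp_mono_exp x y1 y2 : 1 <= x -> y1 <= y2 -> Rpower x y1 <= Rpower x y2.
Proof. move=> H1 H2; exact: Rle_Rpower. Qed.

Lemma rp_deriv (c q z : R) : 0 < 1 + z -> q + 1 <> 0 ->
  is_derive (fun y => c * (Rpower (1 + y) (q + 1) / (q + 1))) z (c * Rpower (1 + z) q).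
Proof.
move=> Hz Hq.
have H1 : is_derive (fun x => Rpower x (q + 1)) (1 + z) ((q + 1) * Rpower (1 + z) (q + 1 - 1)).
  apply/is_derive_Reals; exact: derivable_pt_lim_power.
have H2 : is_derive (fun y => 1 + y) z 1.
  apply: isd_eq; first (apply: isd_plus; [exact: isd_const|exact: isd_id]). ring.
have H3 := is_derive_comp _ _ z _ _ H1 H2.
have H4 := isd_scal _ (c / (q + 1)) z _ H3.
apply: (is_derive_ext (fun y => c / (q + 1) * Rpower (1 + y) (q + 1))).
  move=> y /=; rewrite /Rdiv; ring.
apply: isd_eq; first exact: H4.
rewrite /scal /= /mult /=.
have -> : q + 1 - 1 = q by ring.
field; exact: Hq.
Qed.

Lemma eps_lim x y c : 0 <= y -> 0 <= c ->
  (forall K, (1 <= K)%N -> x <= y * exp (c * (1 / 2) ^ K)) -> x <= y.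
Proof.
move=> Hy Hc H.
case: (Rle_or_lt x y) => // Hxy; exfalso.
have Hy0 : 0 < y.
  case: (Rle_lt_or_eq_dec _ _ Hy) => // E.
  have := H 1%N (leqnn 1); rewrite -E; lra.
have Hq : 0 < ln (x / y).
  rewrite -ln_1; apply: ln_increasing; first lra.
  apply: (Rmult_lt_reg_r y) => //; rewrite /Rdiv Rmult_assoc Rinv_l; lra.
have He : 0 < ln (x / y) / (c + 1) by apply: Rdiv_lt_0_compat; lra.
have Hh : Rabs (1 / 2) < 1 by rewrite Rabs_pos_eq; lra.
case: (pow_lt_1_zero (1 / 2) Hh _ He) => N0 HN.
have HK := HN N0.+1 ltac:(lia).
rewrite Rabs_pos_eq in HK; last (apply: pow_le; lra).
have Hp : 0 <= (1 / 2) ^ N0.+1 by apply: pow_le; lra.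
have : c * (1 / 2) ^ N0.+1 < ln (x / y).
  have : c * (1 / 2) ^ N0.+1 <= c * (ln (x / y) / (c + 1)) by apply: Rmult_le_compat_l; lra.
  have : c * (ln (x / y) / (c + 1)) < ln (x / y).
    apply: (Rmult_lt_reg_r (c + 1)); first lra.
    rewrite Rmult_assoc /Rdiv Rmult_assoc Rinv_l; lra.
  lra.
move/exp_increasing; rewrite exp_ln; last first.
  apply: Rdiv_lt_0_compat; lra.
move=> H2.
have := H N0.+1 ltac:(lia).
have : y * exp (c * (1 / 2) ^ N0.+1) < y * (x / y) by apply: Rmult_lt_compat_l.
have -> : y * (x / y) = x by field; lra.
lra.
Qed.

Lemma right_lim1 (E : R -> R) T s t a Kc : T <= s < t ->
  filterlim E (within (fun x => T <= x) (locally s)) (locally (E s)) ->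
  (forall s', s < s' < t -> a <= Kc * E s') -> a <= Kc * E s.
Proof.
move=> [H1 H2] HE Hb.
have HE' : filterlim E (at_right s) (locally (E s)).
  move=> P HP; have H' : locally s (fun x => T <= x -> P (E x)) := HE P HP.
  rewrite /filtermap /at_right /within; apply: filter_imp H' => x Hx Hsx; apply: Hx; lra.
have PF : ProperFilter' (at_right s) := Proper_StrongProper _ (at_right_proper_filter s).
have FF : Filter (at_right s) := @filter_filter _ _ (at_right_proper_filter s).
have := filterlim_le (F := at_right s) (fun _ => a) (fun y => Kc * E y) a (Kc * E s) _
   (lim_const (FF := FF) a) (lim_mult (FF := FF) _ _ _ _ (lim_const (FF := FF) Kc) HE').
apply => //.
apply: filter_imp (loc_lt t s H2) => y Hy Hsy; apply: Hb; lra.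
Qed.

Lemma right_lim2 (E : R -> R) T s t B : T <= s < t ->
  filterlim E (within (fun x => T <= x) (locally s)) (locally (E s)) ->
  (forall s', s < s' < t -> E s' <= B) -> E s <= B.
Proof.
move=> [H1 H2] HE Hb.
have HE' : filterlim E (at_right s) (locally (E s)).
  move=> P HP; have H' : locally s (fun x => T <= x -> P (E x)) := HE P HP.
  rewrite /filtermap /at_right /within; apply: filter_imp H' => x Hx Hsx; apply: Hx; lra.
have PF : ProperFilter' (at_right s) := Proper_StrongProper _ (at_right_proper_filter s).
have FF : Filter (at_right s) := @filter_filter _ _ (at_right_proper_filter s).
have := filterlim_le (F := at_right s) E (fun _ => B) (E s) B _ HE' (lim_const (FF := FF) B).
apply => //.
apply: filter_imp (loc_lt t s H2) => y Hy Hsy; apply: Hb; lra.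
Qed.

Lemma big_ge_seq (T : eqType) (r : seq T) (F : T -> R) (i0 : T) : (forall i, 0 <= F i) ->
  i0 \in r -> F i0 <= \big[Rplus/0]_(i <- r) F i.
Proof.
move=> H; elim: r => [|x r IH] //=.
have Hpos : forall r', 0 <= \big[Rplus/0]_(i <- r') F i.
  elim => [|y r' IH']; first by rewrite big_nil; lra.
  rewrite big_cons; have := H y; lra.
rewrite big_cons in_cons => /orP [/eqP ->|Hr].
  have := Hpos r; lra.
have := IH Hr; have := H x; lra.
Qed.

Lemma big_ge_one (n : nat) (F : 'I_n -> R) (i0 : 'I_n) : (forall i, 0 <= F i) ->
  F i0 <= \big[Rplus/0]_(i < n) F i.
Proof.
move=> H; apply: big_ge_seq => //; by rewrite mem_index_enum.
Qed.

Lemma half_pow i : (1 <= i)%N -> 2 ^ (i - 1) * (1 / 2) ^ i = 1 / 2.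
Proof.
move=> Hi; have -> : i = (i - 1).+1 by lia.
have -> : ((i - 1).+1 - 1 = i - 1)%N by lia.
rewrite /= -Rmult_assoc (Rmult_comm (2 ^ (i - 1))) Rmult_assoc -Rpow_mult_distr.
have -> : 2 * (1 / 2) = 1 by field.
rewrite pow1; ring.
Qed.

Section Final.
Variable M : R -> R.
Hypothesis HMc : contR M 0.
Hypothesis HI1 : forall t, 0 < t -> ex_Iinf M t.
Hypothesis HI2 : forall t, 0 < t -> ex_Iinf (Iinf M) t.
Hypothesis HJ1 : forall t, 0 < t -> ex_Iinf (sqI M) t.
Hypothesis HJ2 : forall t, 0 < t -> ex_Iinf (psi M) t.
Variables a T : R.
Hypothesis Ha : 0 < a.
Hypothesis HaT : a < T.
Hypothesis HPhi : Phi M a <= 2 / 1296.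
Hypothesis HA1 : forall t, T <= t -> Rabs (Iinf (Qk M 1) t) <= 1.
Variables (r : R) (W : R -> C * C).
Hypothesis Hr : 0 < r.
Hypothesis Hsol : solves_W (bfun M) r T W.
Variables s t Cb p Bz : R.
Hypothesis Hs : T <= s.
Hypothesis Hst : s < t.
Hypothesis Hp1 : p + 1 <> 0.
Hypothesis Z1 : forall z, s < z <= t -> 2 * (Rabs (Iinf M z) + 2 * psi M z) <= r.
Hypothesis Z2 : forall z, s < z <= t -> Rabs (M z) + (Rabs (Iinf M z) + 4 * psi M z) ^ 2 <= Cb * Rpower (1 + z) p.
Hypothesis Z3 : forall s', s < s' < t ->
  Cb / r * (Rpower (1 + t) (p + 1) / (p + 1)) - Cb / r * (Rpower (1 + s') (p + 1) / (p + 1)) <= Bz.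

Lemma final_core : Een W t <= 3 * exp (5 + 2 * Bz) * Een W s /\ Een W s <= 3 * exp (5 + 2 * Bz) * Een W t.
Proof.
have HT : 0 < T by lra.
pose bk K z := fsum (fun k => Qk M k z) 1 K.
pose dbk K z := fsum (fun k => qk M k z) 1 K.
pose eps (K : nat) := 8 * psi M T * (1 / 2) ^ K.
pose Gg z := Cb / r * (Rpower (1 + z) (p + 1) / (p + 1)).
pose gg z := Cb / r * Rpower (1 + z) p.
have PT := psi_ge0 M HMc HI1 HJ1 T HT.
have MM : forall K, (1 <= K)%N -> forall s', s < s' < t ->
   Een W t <= 3 * Een W s' * exp (2 * (Iinf (Qk M 1) t - Iinf (Qk M 1) s') + (Hfun (Phi M) Gg (eps K) t - Hfun (Phi M) Gg (eps K) s')) /\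
   Een W s' <= 3 * Een W t * exp (2 * (Iinf (Qk M 1) s' - Iinf (Qk M 1) t) + (Hfun (Phi M) Gg (eps K) t - Hfun (Phi M) Gg (eps K) s')).
  move=> K HK s' Hs'.
  have Hz0 : forall z, s < z -> a < z by move=> z Hz; lra.
  apply: (mono_main T r W (bfun M) Hr Hsol s t (bk K) (dbk K) (Qk M 1) (Iinf (Qk M 1)) (psi M) (Phi M) Gg gg (eps K) Hs Hst).
  - rewrite /eps; apply: Rmult_le_pos; [lra|apply: pow_le; lra].
  - move=> z Hz; exact: (bK_deriv M HMc HI1 HJ1 HJ2 a Ha HPhi K z HK (Hz0 z (proj1 Hz))).
  - move=> z Hz; apply: isd_eq; first (apply: (A_deriv M HMc HI1 HI2 z); lra).
    rewrite Q1_eq; ring.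
  - move=> z Hz; apply: (Phi_deriv M HMc HI1 HJ1 HJ2 z); lra.
  - move=> z Hz; rewrite /Gg /gg; apply: rp_deriv => //; lra.
  - move=> z Hz.
    have Pz := psi_ge0 M HMc HI1 HJ1 z ltac:(lra).
    have Hab : forall i, (1 <= i)%N -> Rabs (Qk M i.+1 z) <= 4 * psi M z * (1 / 2) ^ i.
      move=> i Hi.
      have H := Qk_bound M HMc HI1 HJ1 HJ2 a Ha HPhi i.+1 z ltac:(lia) (Hz0 z (proj1 Hz)).
      rewrite (_ : (i.+1 - 2 = i - 1)%N) in H; last by lia.
      have E := half_pow i Hi.
      have Hy : 0 < (1 / 2) ^ i by apply: pow_lt; lra.
      have Hx : 0 < 2 ^ (i - 1) by apply: pow_lt; lra.
      have := Rmult_le_compat_r (2 * (1 / 2) ^ i) _ _ ltac:(lra) H.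
      have -> : 2 ^ (i - 1) * Rabs (Qk M i.+1 z) * (2 * (1 / 2) ^ i) =
                2 * (2 ^ (i - 1) * (1 / 2) ^ i) * Rabs (Qk M i.+1 z) by ring.
      rewrite E; lra.
    have G := geom_tail (fun i => Qk M i.+1 z) (4 * psi M z) ltac:(lra) Hab (K - 1).
    rewrite (sum_n_fsum (fun k => Qk M k z)) (_ : (K - 1).+1 = K) in G; last by lia.
    rewrite /bfun /bk; apply: Rle_trans G _.
    have -> : (1 / 2) ^ (K - 1) = 2 * (1 / 2) ^ K.
      have -> : K = (K - 1).+1 by lia. have -> : ((K - 1).+1 - 1 = K - 1)%N by lia.
      rewrite /=; field.
    rewrite /eps.
    have := psi_nonincr M HMc HI1 HJ1 T z HT ltac:(lra).
    have : 0 <= (1 / 2) ^ K by apply: pow_le; lra.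
    nra.
  - move=> z Hz; rewrite /bk.
    have -> : K = (K - 1).+1 by lia.
    rewrite fsum_S Q1_eq.
    have := btail M HMc HI1 HJ1 HJ2 a Ha HPhi (K - 1) z (Hz0 z (proj1 Hz)).
    have := Rabs_triang (- Iinf M z) (fsum (fun k => Qk M k z) 2 (K - 1)).
    rewrite Rabs_Ropp.
    have := Z1 z Hz; lra.
  - move=> z Hz; rewrite /bk.
    have -> : K = (K - 1).+1 by lia.
    rewrite fsum_S.
    have -> : Qk M 1 z + fsum (fun k => Qk M k z) 2 (K - 1) - Qk M 1 z = fsum (fun k => Qk M k z) 2 (K - 1) by ring.
    exact: (btail M HMc HI1 HJ1 HJ2 a Ha HPhi (K - 1) z (Hz0 z (proj1 Hz))).
  - move=> z Hz; rewrite /dbk /gg.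
    have := bK_dbound M HMc HI1 HJ1 HJ2 a Ha HPhi K z HK (Hz0 z (proj1 Hz)).
    have := Z2 z Hz.
    have -> : r * (Cb / r * Rpower (1 + z) p) = Cb * Rpower (1 + z) p by field; lra.
    lra.
  - exact: Hs'.
have EB : forall K, (1 <= K)%N -> forall s', s < s' < t ->
  forall x, Rabs x <= 4 ->
  x + (Hfun (Phi M) Gg (eps K) t - Hfun (Phi M) Gg (eps K) s') <= 5 + 2 * Bz + (80 * psi M T * (t - s)) * (1 / 2) ^ K.
  move=> K HK s' Hs' x Hx.
  rewrite /Hfun.
  have P1 := Phi_ge0 M HMc HI1 HJ1 HJ2 t ltac:(lra).
  have P2 := Phi_nonincr M HMc HI1 HJ1 HJ2 a s' Ha ltac:(lra).
  have G : Gg t - Gg s' <= Bz := Z3 s' Hs'.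
  have Hp : 0 <= (1 / 2) ^ K by apply: pow_le; lra.
  have : 10 * eps K * t - 10 * eps K * s' <= (80 * psi M T * (t - s)) * (1 / 2) ^ K.
    rewrite /eps.
    have : 0 <= psi M T * (1 / 2) ^ K by apply: Rmult_le_pos.
    nra.
  move: (abs_le_elim _ _ Hx); lra.
have HAb : forall s', s < s' < t -> Rabs (2 * (Iinf (Qk M 1) t - Iinf (Qk M 1) s')) <= 4 /\
   Rabs (2 * (Iinf (Qk M 1) s' - Iinf (Qk M 1) t)) <= 4.
  move=> s' Hs'.
  have := HA1 t ltac:(lra); have := HA1 s' ltac:(lra).
  move=> /abs_le_elim H1 /abs_le_elim H2.
  split; apply: Rabs_le; lra.
set Kc := 3 * exp (5 + 2 * Bz).
have HKc : 0 < Kc by rewrite /Kc; have := exp_pos (5 + 2 * Bz); lra.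
have E0 : forall z, 0 <= Een W z by move=> z; rewrite /Een; nra.
have Cs := W_cont T r W (bfun M) Hsol s Hs.
split.
- apply: (right_lim1 (Een W) T s t (Een W t) Kc ltac:(lra) Cs) => s' Hs'.
  apply: (eps_lim _ _ (80 * psi M T * (t - s))).
  + have := E0 s'; nra.
  + have : 0 <= t - s by lra. nra.
  move=> K HK.
  have [M1 _] := MM K HK s' Hs'.
  apply: Rle_trans M1 _.
  have [A1 _] := HAb s' Hs'.
  have X := EB K HK s' Hs' _ A1.
  have H := exp_mono _ _ X; rewrite (exp_plus (5 + 2 * Bz)) in H.
  have := Rmult_le_compat_l _ _ _ (E0 s') H.
  rewrite /Kc; lra.
- apply: (right_lim2 (Een W) T s t (Kc * Een W t) ltac:(lra) Cs) => s' Hs'.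
  apply: (eps_lim _ _ (80 * psi M T * (t - s))).
  + have := E0 t; nra.
  + have : 0 <= t - s by lra. nra.
  move=> K HK.
  have [_ M2] := MM K HK s' Hs'.
  apply: Rle_trans M2 _.
  have [_ A2] := HAb s' Hs'.
  have X := EB K HK s' Hs' _ A2.
  have H := exp_mono _ _ X; rewrite (exp_plus (5 + 2 * Bz)) in H.
  have := Rmult_le_compat_l _ _ _ (E0 t) H.
  rewrite /Kc; lra.
Qed.
End Final.

Lemma zone_conv (N r x alpha : R) : 0 < x -> N <= Rpower x alpha * r -> Rpower x (- alpha) * N <= r.
Proof.
move=> Hx H; rewrite Rpower_Ropp.
have Hp := rp_pos x alpha.
apply: (Rmult_le_reg_l (Rpower x alpha)) => //.
rewrite -Rmult_assoc Rinv_r; lra.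
Qed.

Lemma Z3_lemma (Cb r N p alpha s' t : R) : 0 <= Cb -> 0 < r -> 0 < N -> p + 1 <> 0 ->
  0 <= s' -> s' <= t ->
  Rpower (1 + s') (- alpha) * N <= r -> Rpower (1 + t) (- alpha) * N <= r ->
  (p + 1 < 0 -> p + 1 <= - alpha) -> (0 < p + 1 -> p + 1 = - alpha) ->
  Cb / r * (Rpower (1 + t) (p + 1) / (p + 1)) - Cb / r * (Rpower (1 + s') (p + 1) / (p + 1))
    <= Cb / (N * Rabs (p + 1)).
Proof.
move=> HC Hr HN Hp Hs Hst Zs Zt H1 H2.
have Pt := rp_pos (1 + t) (p + 1); have Ps := rp_pos (1 + s') (p + 1).
have Hcr : 0 <= Cb / r by apply: Rdiv_le_0_compat; lra.
case: (Rlt_or_le (p + 1) 0) => Hs0.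
- rewrite Rabs_left //.
  have A1 : Rpower (1 + t) (p + 1) / (p + 1) <= 0.
    rewrite /Rdiv; have : / (p + 1) < 0 by apply: Rinv_lt_0_compat.
    nra.
  have A2 : Rpower (1 + s') (p + 1) <= Rpower (1 + s') (- alpha).
    apply: rp_mono_exp; [lra|exact: H1].
  have A3 : Rpower (1 + s') (p + 1) * N <= r.
    apply: Rle_trans Zs; apply: Rmult_le_compat_r; lra.
  have E : Cb / r * (Rpower (1 + s') (p + 1) / (p + 1)) = - (Cb * (Rpower (1 + s') (p + 1) * N / r) / (N * - (p + 1))).
    field; lra.
  have A4 : Rpower (1 + s') (p + 1) * N / r <= 1.
    apply: (Rmult_le_reg_r r) => //; rewrite /Rdiv Rmult_assoc Rinv_l; lra.
  have A5 : Cb * (Rpower (1 + s') (p + 1) * N / r) / (N * - (p + 1)) <= Cb / (N * - (p + 1)).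
    rewrite /Rdiv; apply: Rmult_le_compat_r.
      apply: Rlt_le; apply: Rinv_0_lt_compat; nra.
    have := Rdiv_le_0_compat (Rpower (1 + s') (p + 1) * N) r ltac:(nra) Hr.
    rewrite /Rdiv in A4 |- *; nra.
  have : Cb / r * (Rpower (1 + t) (p + 1) / (p + 1)) <= 0 by nra.
  lra.
- have Hp0 : 0 < p + 1 by lra.
  rewrite Rabs_pos_eq; last lra.
  have Ep := H2 Hp0.
  have A1 : 0 <= Cb / r * (Rpower (1 + s') (p + 1) / (p + 1)).
    apply: Rmult_le_pos => //; apply: Rdiv_le_0_compat; lra.
  have A3 : Rpower (1 + t) (p + 1) * N <= r by rewrite Ep.
  have A4 : Rpower (1 + t) (p + 1) * N / r <= 1.
    apply: (Rmult_le_reg_r r) => //; rewrite /Rdiv Rmult_assoc Rinv_l; lra.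
  have E : Cb / r * (Rpower (1 + t) (p + 1) / (p + 1)) = Cb * (Rpower (1 + t) (p + 1) * N / r) / (N * (p + 1)).
    field; lra.
  have A5 : Cb * (Rpower (1 + t) (p + 1) * N / r) / (N * (p + 1)) <= Cb / (N * (p + 1)).
    rewrite /Rdiv; apply: Rmult_le_compat_r.
      apply: Rlt_le; apply: Rinv_0_lt_compat; nra.
    have := Rdiv_le_0_compat (Rpower (1 + t) (p + 1) * N) r ltac:(nra) Hr.
    rewrite /Rdiv in A4 |- *; nra.
  lra.
Qed.

Lemma txi_facts (T N alpha r t : R) : 0 < alpha -> 0 < r -> 0 < N -> 0 <= T -> T <= t ->
  N <= Rpower (1 + t) alpha * r ->
  T <= t_xi T N alpha r /\ t_xi T N alpha r <= t /\ N <= Rpower (1 + t_xi T N alpha r) alpha * r.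
Proof.
move=> Ha Hr HN HT Ht Hz.
set q := Rpower (N / r) (/ alpha).
have Hnr : 0 < N / r by apply: Rdiv_lt_0_compat.
have Hq : 0 < q by apply: rp_pos.
have Hz' : N / r <= Rpower (1 + t) alpha.
  apply: (Rmult_le_reg_r r) => //; rewrite /Rdiv Rmult_assoc Rinv_l; lra.
have Hqt : q <= 1 + t.
  rewrite /q; have := rp_mono_base (N / r) (Rpower (1 + t) alpha) (/ alpha) ltac:(apply: Rlt_le; apply: Rinv_0_lt_compat; lra) (conj Hnr Hz').
  rewrite Rpower_mult Rinv_r ?Rpower_1; lra.
rewrite /t_xi -/q.
split; first exact: Rmax_l.
split; first by apply: Rmax_lub; lra.
have Hs : q <= 1 + Rmax T (q - 1) by have := Rmax_r T (q - 1); lra.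
have := rp_mono_base q (1 + Rmax T (q - 1)) alpha ltac:(lra) (conj Hq Hs).
rewrite /q Rpower_mult Rinv_l ?Rpower_1 //; try lra.
move=> H; apply: (Rle_trans _ (N / r * r)).
  rewrite /Rdiv Rmult_assoc Rinv_l; lra.
apply: Rmult_le_compat_r; lra.
Qed.

Lemma C2_E (W : R -> C * C) z : C2norm (W z) = sqrt (Een W z).
Proof.
rewrite /C2norm /Cmod !pow2_sqrt.
- congr sqrt; rewrite /Een /wu1 /wu2 /wv1 /wv2; ring.
- have := pow2_ge_0 (fst (snd (W z))); have := pow2_ge_0 (snd (snd (W z))); lra.
- have := pow2_ge_0 (fst (fst (W z))); have := pow2_ge_0 (snd (fst (W z))); lra.
Qed.

Lemma vnorm_pos n (xi : 'I_n -> R) : xi <> (fun _ => 0) -> 0 < vnorm n xi.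
Proof.
move=> Hxi.
have [i Hi] : exists i, xi i <> 0.
  apply: Classical_Pred_Type.not_all_not_ex => H; apply: Hxi.
  apply: functional_extensionality => i; by apply: NNPP.
rewrite /vnorm; apply: sqrt_lt_R0.
apply: Rlt_le_trans (big_ge_one n (fun i => xi i * xi i) i _).
  have := pow2_ge_0 (xi i); nra.
move=> j; nra.
Qed.

Lemma final_bounds (E : R -> R) (Kc : R) s t : 1 <= Kc -> (forall z, 0 <= E z) ->
  E t <= Kc * E s -> E s <= Kc * E t ->
  / sqrt Kc * sqrt (E s) <= sqrt (E t) /\ sqrt (E t) <= sqrt Kc * sqrt (E s).
Proof.
move=> HK H0 H1 H2.
have Hs := sqrt_pos (E s); have Ht := sqrt_pos (E t).
have HsK : 0 < sqrt Kc by apply: sqrt_lt_R0; lra.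
split.
- apply: (Rmult_le_reg_l (sqrt Kc)) => //.
  rewrite -Rmult_assoc Rinv_r ?Rmult_1_l; last lra.
  rewrite -sqrt_mult; [|lra|exact: H0].
  apply: sqrt_le_1_alt; exact: H2.
- rewrite -sqrt_mult; [|lra|exact: H0].
  apply: sqrt_le_1_alt; exact: H1.
Qed.
Theorem proposition1
  (M : R -> R) (alpha beta gamma : R)
  (* M continuous on [0, oo) *)
  (HMc : forall t, 0 <= t ->
     filterlim M (within (fun x => 0 <= x) (locally t)) (locally (M t)))
  (* parameter constraints *)
  (Ha : alpha <= 1) (Hb : beta < 1) (Hg : 0 < gamma)
  (Habg1 : alpha <> 0 -> gamma >= beta /\ beta >= (alpha + 1) / 2)
  (Habg0 : alpha = 0 -> gamma >= beta /\ beta > 1 / 2)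
  (* the improper integrals occurring in (M1)-(M3) exist *)
  (HI1 : forall t, 0 <= t -> ex_Iinf M t)
  (HI2 : forall t, 0 <= t -> ex_Iinf (Iinf M) t)
  (HJ1 : forall t, 0 <= t -> ex_Iinf (fun s => Iinf M s ^ 2) t)
  (HJ2 : forall t, 0 <= t -> ex_Iinf (Iinf (fun s => Iinf M s ^ 2)) t)
  (* (M1) *)
  (HM1p : 0 <= alpha -> exists C, forall t, 0 <= t ->
     RInt (fun s => Rabs (Iinf (Iinf M) s)) 0 t <= C * Rpower (1 + t) alpha)
  (HM1n : alpha <= 0 ->
     (forall t, 0 <= t -> ex_Iinf (fun s => Rabs (Iinf (Iinf M) s)) t) /\
     exists C, forall t, 0 <= t ->
     Iinf (fun s => Rabs (Iinf (Iinf M) s)) t <= C * Rpower (1 + t) alpha)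
  (* (M2) *)
  (HM2 : exists C, forall t, 0 <= t -> Rabs (M t) <= C * Rpower (1 + t) (- (2 * beta)))
  (* (M3) *)
  (HM3a : exists C, forall t, 0 <= t -> Rabs (Iinf M t) <= C * Rpower (1 + t) (- gamma))
  (HM3b : exists C, forall t, 0 <= t ->
     Iinf (fun s => Iinf M s ^ 2) t <= C * Rpower (1 + t) (- gamma))
  (HM3c : ex_Iinf (Iinf (fun s => Iinf M s ^ 2)) 0)
  (* sup_{t>=0} (1+t)^alpha \int_t^oo \int_s^oo (\int_sigma^oo M)^2 < oo *)
  (Hsup : exists C, forall t, 0 <= t ->
     Rpower (1 + t) alpha * Iinf (Iinf (fun s => Iinf M s ^ 2)) t <= C)
  (* choice of T *)
  (T : R) (HT : 0 < T)
  (HT1 : forall t, T <= t -> Rabs (Iinf (Qk M 1) t) <= 1)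
  (HT2 : forall t, T <= t -> phi M t <= / 6 ^ 4)
  (* the solutions W(., xi), xi in R^n *)
  (n : nat) (W : R -> ('I_n -> R) -> C * C)
  (HW : forall xi : 'I_n -> R, solves_W (bfun M) (vnorm n xi) T (fun t => W t xi)) :
  exists N K1 : R, 0 < N /\ 0 < K1 /\
    forall (xi : 'I_n -> R) (t : R),
      xi <> (fun _ => 0) -> T <= t -> Rpower (1 + t) alpha * vnorm n xi >= N ->
      (0 < alpha ->
         / K1 * C2norm (W (t_xi T N alpha (vnorm n xi)) xi) <= C2norm (W t xi) /\
         C2norm (W t xi) <= K1 * C2norm (W (t_xi T N alpha (vnorm n xi)) xi)) /\
      (alpha <= 0 ->
         / K1 * C2norm (W T xi) <= C2norm (W t xi) /\
         C2norm (W t xi) <= K1 * C2norm (W T xi)).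
Proof.
have HMc0 : contR M 0.
  move=> x Hx; have H := HMc x (Rlt_le _ _ Hx); rewrite within_loc_eq // in H.
have HI1' : forall t, 0 < t -> ex_Iinf M t by move=> t Ht; apply: HI1; lra.
have HI2' : forall t, 0 < t -> ex_Iinf (Iinf M) t by move=> t Ht; apply: HI2; lra.
have HJ1' : forall t, 0 < t -> ex_Iinf (sqI M) t by move=> t Ht; apply: HJ1; lra.
have HJ2' : forall t, 0 < t -> ex_Iinf (psi M) t by move=> t Ht; apply: HJ2; lra.
have Hphi : forall x, 0 < x -> phi M x = Phi M x.
  have Eq2 : qk M 2 = sqI M.
    rewrite qk_ge2 //; apply: functional_extensionality => y.
    rewrite (_ : (2 - 1 = 1)%N) // /fsum /= Q1_eq /sqI; ring.
  have EQ2 : Qk M 2 = fun y => - psi M y by rewrite (Qk_S M 1) Eq2.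
  move=> x Hx; rewrite /phi EQ2.
  have [_ E] := Iinf_opp (psi M) 0 x (psi_cont M HMc0 HI1' HJ1') Hx (HJ2' x Hx).
  rewrite E /Phi; ring.
have [a0 [Ha0' [HaT HPa]]] : exists a, 0 < a /\ a < T /\ Phi M a <= 2 / 1296.
  have Cc := Phi_cont M HMc0 HI1' HJ1' HJ2' T HT.
  have PT : Phi M T <= 1 / 1296.
    rewrite -Hphi //; have := HT2 T (Rle_refl T).
    rewrite (_ : / 6 ^ 4 = 1 / 1296) //; field.
  have /continuity_pt_locally C' : continuity_pt (Phi M) T by apply/continuity_pt_filterlim.
  have He : 0 < 1 / 1296 by lra.
  case: (C' (mkposreal _ He)) => d Hd.
  exists (Rmax (T / 2) (T - d / 2)).
  have Hd0 := cond_pos d.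
  split; first (apply: Rlt_le_trans (Rmax_l _ _); lra).
  split; first (apply: Rmax_lub_lt; lra).
  have := Hd (Rmax (T / 2) (T - d / 2)).
  have Hball : ball T d (Rmax (T / 2) (T - d / 2)).
    apply: ball_R; rewrite /Rmax; case: Rle_dec => Hc; apply: Rabs_def1; lra.
  move/(_ Hball) => /= /Rabs_def2; lra.
case: HM2 => CM HCM.
case: HM3a => CI HCI.
case: HM3b => CP HCP.
have Hag : alpha <= gamma.
  case: (Req_dec alpha 0) => H0; first lra.
  have [H1 H2] := Habg1 H0; lra.
have Hgb : beta <= gamma.
  case: (Req_dec alpha 0) => H0; [have [H1 H2] := Habg0 H0|have [H1 H2] := Habg1 H0]; lra.
set C0 := Rabs CI + 4 * Rabs CP + 1.
have HC0 : 0 < C0 by rewrite /C0; have := Rabs_pos CI; have := Rabs_pos CP; lra.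
set Cb := Rabs CM + C0 ^ 2.
have HCb : 0 <= Cb by rewrite /Cb; have := Rabs_pos CM; nra.
set N := 2 * C0.
have HN : 0 < N by rewrite /N; lra.
have [p [Hp1 [Hp2 [Hp3 Hp4]]]] : exists p, p + 1 <> 0 /\ - (2 * beta) <= p /\
    (p + 1 < 0 -> p + 1 <= - alpha) /\ (0 < p + 1 -> p + 1 = - alpha).
  case: (Req_dec alpha 0) => H0.
    have [_ H] := Habg0 H0.
    exists (- (2 * beta)); split; [move=> E; lra|split; [lra|split; move=> E; lra]].
  have [_ H] := Habg1 H0.
  exists (-1 - alpha); split; [move=> E; apply: H0; lra|split; [lra|split; move=> E; lra]].
set Bz := Cb / (N * Rabs (p + 1)).
have HBz : 0 <= Bz.
  rewrite /Bz; apply: Rdiv_le_0_compat => //.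
  have := Rabs_pos_lt _ Hp1; nra.
set Kc := 3 * exp (5 + 2 * Bz).
have HKc : 1 <= Kc.
  rewrite /Kc; have := exp_mono 0 (5 + 2 * Bz) ltac:(lra); rewrite exp_0; lra.
have Dec1 : forall z, 0 < z -> 2 * (Rabs (Iinf M z) + 2 * psi M z) <= N * Rpower (1 + z) (- gamma).
  move=> z Hz; have H1 := HCI z ltac:(lra); have H2 := HCP z ltac:(lra).
  have P := psi_ge0 M HMc0 HI1' HJ1' z Hz.
  have R0 := rp_pos (1 + z) (- gamma).
  have : CI * Rpower (1 + z) (- gamma) <= Rabs CI * Rpower (1 + z) (- gamma).
    apply: Rmult_le_compat_r; [lra|apply: Rle_abs].
  have : CP * Rpower (1 + z) (- gamma) <= Rabs CP * Rpower (1 + z) (- gamma).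
    apply: Rmult_le_compat_r; [lra|apply: Rle_abs].
  have E : psi M z = Iinf (fun s => Iinf M s ^ 2) z by [].
  rewrite /N /C0; rewrite E in P; lra.
have Dec2 : forall z, 0 < z -> Rabs (M z) + (Rabs (Iinf M z) + 4 * psi M z) ^ 2 <= Cb * Rpower (1 + z) p.
  move=> z Hz; have H1 := HCI z ltac:(lra); have H2 := HCP z ltac:(lra); have H3 := HCM z ltac:(lra).
  have P := psi_ge0 M HMc0 HI1' HJ1' z Hz.
  have R0 := rp_pos (1 + z) (- gamma).
  have E : psi M z = Iinf (fun s => Iinf M s ^ 2) z by [].
  rewrite -E in H2.
  have B1 : Rabs (Iinf M z) + 4 * psi M z <= C0 * Rpower (1 + z) (- gamma).
    have : CI * Rpower (1 + z) (- gamma) <= Rabs CI * Rpower (1 + z) (- gamma).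
      apply: Rmult_le_compat_r; [lra|apply: Rle_abs].
    have : CP * Rpower (1 + z) (- gamma) <= Rabs CP * Rpower (1 + z) (- gamma).
      apply: Rmult_le_compat_r; [lra|apply: Rle_abs].
    rewrite /C0; lra.
  have B2 : (Rabs (Iinf M z) + 4 * psi M z) ^ 2 <= C0 ^ 2 * Rpower (1 + z) (- (2 * beta)).
    apply: Rle_trans (_ : _ <= (C0 * Rpower (1 + z) (- gamma)) ^ 2) _.
      apply: pow_incr; split => //; have := Rabs_pos (Iinf M z); lra.
    rewrite Rpow_mult_distr; apply: Rmult_le_compat_l; first nra.
    rewrite /= Rmult_1_r -Rpower_plus; apply: rp_mono_exp; lra.
  have B3 : Rabs (M z) <= Rabs CM * Rpower (1 + z) (- (2 * beta)).
    apply: Rle_trans H3 _; apply: Rmult_le_compat_r; [have := rp_pos (1 + z) (- (2 * beta)); lra|apply: Rle_abs].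
  have B4 : Rpower (1 + z) (- (2 * beta)) <= Rpower (1 + z) p by apply: rp_mono_exp; lra.
  have := Rmult_le_compat_l Cb _ _ HCb B4; rewrite /Cb; lra.
exists N, (sqrt Kc).
split => //; split; first (apply: sqrt_lt_R0; lra).
move=> xi t Hxi Ht Hzone0.
have Hzone := Rge_le _ _ Hzone0.
set r := vnorm n xi.
have Hr : 0 < r by apply: vnorm_pos.
pose W' := fun z => W z xi.
have Hsol : solves_W (bfun M) r T W' := HW xi.
have E0 : forall z, 0 <= Een W' z by move=> z; rewrite /Een; nra.
have Core : forall s, T <= s -> s <= t -> (forall z, s <= z <= t -> N <= Rpower (1 + z) alpha * r) ->
    Een W' t <= Kc * Een W' s /\ Een W' s <= Kc * Een W' t.
  move=> s Hs Hst Hz.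
  case: (Rle_lt_or_eq_dec _ _ Hst) => Hst'; last first.
    rewrite Hst'; have := E0 t; nra.
  have Zc : forall z, s <= z <= t -> Rpower (1 + z) (- alpha) * N <= r.
    move=> z Hz'; apply: zone_conv; [lra|exact: Hz].
  have Z1' : forall z, s < z <= t -> 2 * (Rabs (Iinf M z) + 2 * psi M z) <= r.
    move=> z Hz'; apply: Rle_trans (Dec1 z ltac:(lra)) _.
    have := Zc z ltac:(lra).
    have := rp_mono_exp (1 + z) (- gamma) (- alpha) ltac:(lra) ltac:(lra).
    nra.
  have Z2' : forall z, s < z <= t -> Rabs (M z) + (Rabs (Iinf M z) + 4 * psi M z) ^ 2 <= Cb * Rpower (1 + z) p.
    move=> z Hz'; apply: Dec2; lra.
  have Z3' : forall s', s < s' < t ->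
      Cb / r * (Rpower (1 + t) (p + 1) / (p + 1)) - Cb / r * (Rpower (1 + s') (p + 1) / (p + 1)) <= Bz.
    move=> s' Hs'; apply: Z3_lemma => //; try lra; try (apply: Zc; lra).
    + exact: Hp3.
    + exact: Hp4.
  have [F1 F2] := final_core M HMc0 HI1' HI2' HJ1' HJ2' a0 T Ha0' HaT HPa HT1 r W' Hr Hsol s t Cb p Bz
     Hs Hst' Hp1 Z1' Z2' Z3'.
  rewrite /Kc; split; [exact: F1|exact: F2].
rewrite !(C2_E W').
split.
- move=> Ha0.
  have [T1 [T2 T3]] := txi_facts T N alpha r t Ha0 Hr HN ltac:(lra) Ht Hzone.
  have Zz : forall z, t_xi T N alpha r <= z <= t -> N <= Rpower (1 + z) alpha * r.
    move=> z Hz; apply: Rle_trans T3 _; apply: Rmult_le_compat_r; first lra.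
    apply: rp_mono_base; [lra|split; [have := Rle_trans _ _ _ T1 (proj1 Hz); lra|lra]].
  have [H1 H2] := Core (t_xi T N alpha r) T1 T2 Zz.
  exact: (final_bounds (Een W') Kc (t_xi T N alpha r) t HKc E0 H1 H2).
- move=> Ha0.
  have Zz : forall z, T <= z <= t -> N <= Rpower (1 + z) alpha * r.
    move=> z Hz; apply: Rle_trans Hzone _; apply: Rmult_le_compat_r; first (rewrite -/r; lra).
    apply: rp_anti_base; [lra|split; lra].
  have [H1 H2] := Core T (Rle_refl T) Ht Zz.
  exact: (final_bounds (Een W') Kc T t HKc E0 H1 H2).
Qed.
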